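(* If an atomic flow $A$ is cycle-free and $A\to_{\mathsf c}^\star B$, then $B$ is cycle-free.
   Context: An atomic flow is a tuple $(V,E,\eta,up,lo)$: finite sets of vertices and edges, a labelling of vertices by interaction, cut, weakening, coweakening, contraction or cocontraction, and maps $up:E\to V\cup\{\top\}$, $lo:E\to V\cup\{\bot\}$. Upper edges of $\nu$: $lo(\epsilon)=\nu$; lower edges: $up(\epsilon)=\nu$. (Upper, lower) edge numbers: $(0,2)$ interaction, $(2,0)$ cut, $(0,1)$ weakening, $(1,0)$ coweakening, $(2,1)$ contraction, $(1,2)$ cocontraction; no directed cycles; there is $\pi:E\to\{+,-\}$ giving all edges of a (co)contraction the same sign and the two edges of an interaction/cut different signs. A path from $\nu$ to $\nu'$ is a sequence of edges $\epsilon_1,\dots,\epsilon_h$ with $lo(\epsilon_i)=up(\epsilon_{i+1})$, $up(\epsilon_1)=\nu$, $lo(\epsilon_h)=\nu'$; its reversal is a path from $\nu'$ to $\nu$. An $\mathsf{ai}$-path from $\nu$ to $\nu'$ is either a path from $\nu$ to $\nu'$ or a sequence $\epsilon_1,\dots,\epsilon_k,\epsilon_{k+1},\dots,\epsilon_h$ with $\epsilon_k\neq\epsilon_{k+1}$ such that, for some interaction or cut vertex $\nu''$, $\epsilon_1,\dots,\epsilon_k$ is an $\mathsf{ai}$-path from $\nu$ to $\nu''$ and $\epsilon_{k+1},\dots,\epsilon_h$ is an $\mathsf{ai}$-path from $\nu''$ to $\nu'$. An $\mathsf{ai}$-cycle is an $\mathsf{ai}$-path from a vertex to itself in which no edge appears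 twice. A flow is cycle-free if it has no $\mathsf{ai}$-cycle. $\to_{\mathsf c}^\star$ is the reflexive-transitive closure of $\to_{\mathsf c}$, where $A\to_{\mathsf c}B$ means $B$ results from $A$ by one of these subgraph replacements: (c1) a contraction with upper edges $\epsilon_1,\epsilon_2$ whose lower edge is an upper edge of a cut with other upper edge $\epsilon_3$: replace by a new cocontraction with upper edge $\epsilon_3$ and new lower edges $\delta_1,\delta_2$, and two new cuts with upper edges $\{\epsilon_1,\delta_1\}$ and $\{\epsilon_2,\delta_2\}$; (c2) an interaction with lower edges $\epsilon_3,\epsilon_4$ where $\epsilon_4$ is the upper edge of a cocontraction with lower edges $\epsilon_1,\epsilon_2$: replace by a new contraction with lower edge $\epsilon_3$ and new upper edges $\delta_1,\delta_2$, and two new interactions with lower edges $\{\epsilon_1,\delta_1\}$ and $\{\epsilon_2,\delta_2\}$; (c3) a contraction with upper edges $\epsilon_1,\epsilon_2$ whose lower edge is the upper edge of a cocontraction with lower edges $\epsilon_3,\epsilon_4$: replace by cocontractions $\kappa_1,\kappa_2$ with upper edges $\epsilon_1,\epsilon_2$, contractions $\gamma_3,\gamma_4$ with lower edges $\epsilon_3,\epsilon_4$, and four new edges, one from each $\kappa_i$ to each $\gamma_j$. *)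

(* Defs.v *)
From mathcomp Require Import all_boot.
Set Implicit Arguments. Unset Strict Implicit. Unset Printing Implicit Defensive.

Inductive kind := Int | Cut | Weak | Coweak | Contr | Cocontr.

(* (number of upper edges, number of lower edges) required for each label. *)
Definition arity (k : kind) : nat * nat :=
  match k with
  | Int => (0, 2) | Cut => (2, 0) | Weak => (0, 1) | Coweak => (1, 0)
  | Contr => (2, 1) | Cocontr => (1, 2)
  end.

(* An atomic flow: vertices and edges are named by natural numbers and listed
   (without repetition) in fV and fE.  fup e = None encodes up(e) = ⊤,
   flo e = None encodes lo(e) = ⊥. *)
Record flow := Flow {
  fV : seq nat;
  fE : seq nat;
  feta : nat -> kind;
  fup : nat -> option nat;
  flo : nat -> option nat }.

Definition down_path (A : flow) (v v' : nat) (s : seq nat) : Prop :=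
  match s with
  | [::] => False
  | e :: s' =>
      [/\ fup A e = Some v, flo A (last e s') = Some v',
          all (fun x => x \in fE A) s &
          path (fun x y => (flo A x != None) && (flo A x == fup A y)) e s']
  end.

Definition flow_path (A : flow) (v v' : nat) (s : seq nat) : Prop :=
  down_path A v v' s \/ down_path A v' v (rev s).

Inductive ai_path (A : flow) : nat -> nat -> seq nat -> Prop :=
  | ai_base v v' s : flow_path A v v' s -> ai_path A v v' s
  | ai_join v w v' s1 s2 :
      ai_path A v w s1 -> ai_path A w v' s2 ->
      (feta A w = Int \/ feta A w = Cut) -> w \in fV A ->
      last 0 s1 <> head 0 s2 ->
      ai_path A v v' (s1 ++ s2).

Definition ai_cycle (A : flow) (v : nat) (s : seq nat) : Prop :=
  v \in fV A /\ ai_path A v v s /\ uniq s.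

Definition cycle_free (A : flow) : Prop := ~ exists v s, ai_cycle A v s.

Definition incident (A : flow) (v e : nat) : bool :=
  (e \in fE A) && ((flo A e == Some v) || (fup A e == Some v)).

Definition is_flow (A : flow) : Prop :=
  [/\ uniq (fV A), uniq (fE A),
      (forall e v, e \in fE A -> fup A e = Some v -> v \in fV A),
      (forall e v, e \in fE A -> flo A e = Some v -> v \in fV A) &
      [/\ (forall v, v \in fV A ->
             (count (fun e => flo A e == Some v) (fE A),
              count (fun e => fup A e == Some v) (fE A)) = arity (feta A v)),
          ~ (exists v s, down_path A v v s) &
          exists pi : nat -> bool, forall v, v \in fV A ->
            ((feta A v = Contr \/ feta A v = Cocontr) ->
               forall e e', incident A v e -> incident A v e' -> pi e = pi e') /\
            ((feta A v = Int \/ feta A v = Cut) ->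
               forall e e', incident A v e -> incident A v e' -> e != e' ->
               pi e != pi e')]].

(* Common frame of a subgraph replacement: vertices rV and edges rE of A are
   removed, new vertices nV and new edges nE are added (new names are pairwise
   distinct and distinct from the names of the kept vertices/edges), and the
   labels of kept vertices are unchanged. *)
Definition frame (A B : flow) (rV rE nV nE : seq nat) : Prop :=
  [/\ uniq nV, uniq nE,
      all (fun v => (v \notin fV A) || (v \in rV)) nV,
      all (fun e => (e \notin fE A) || (e \in rE)) nE &
      [/\ uniq (fV B), uniq (fE B),
          (forall v, (v \in fV B) = ((v \in fV A) && (v \notin rV)) || (v \in nV)),
          (forall e, (e \in fE B) = ((e \in fE A) && (e \notin rE)) || (e \in nE)) &
          (forall v, v \in fV A -> v \notin rV -> feta B v = feta A v)]].

Definition step_c1 (A B : flow) : Prop :=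
  exists gam kap e1 e2 e e3 nu k1 k2 d1 d2 : nat,
    [/\ gam \in fV A, feta A gam = Contr, kap \in fV A, feta A kap = Cut &
        [/\ e1 \in fE A, e2 \in fE A, e \in fE A, e3 \in fE A & e1 != e2 ]] /\
    [/\ flo A e1 = Some gam, flo A e2 = Some gam, fup A e = Some gam,
        flo A e = Some kap & (e3 != e /\ flo A e3 = Some kap)] /\
    frame A B [:: gam; kap] [:: e] [:: nu; k1; k2] [:: d1; d2] /\
    [/\ feta B nu = Cocontr, feta B k1 = Cut & feta B k2 = Cut] /\
    (forall x, x \in fE B ->
       fup B x = (if x == d1 then Some nu else if x == d2 then Some nu
                  else fup A x) /\
       flo B x = (if x == d1 then Some k1 else if x == d2 then Some k2
                  else if x == e1 then Some k1 else if x == e2 then Some k2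
                  else if x == e3 then Some nu else flo A x)).

Definition step_c2 (A B : flow) : Prop :=
  exists iota kap e3 e4 e1 e2 gam i1 i2 d1 d2 : nat,
    [/\ iota \in fV A, feta A iota = Int, kap \in fV A, feta A kap = Cocontr &
        [/\ e1 \in fE A, e2 \in fE A, e3 \in fE A, e4 \in fE A & e3 != e4 ]] /\
    [/\ fup A e3 = Some iota, fup A e4 = Some iota, flo A e4 = Some kap,
        fup A e1 = Some kap & (fup A e2 = Some kap /\ e1 != e2)] /\
    frame A B [:: iota; kap] [:: e4] [:: gam; i1; i2] [:: d1; d2] /\
    [/\ feta B gam = Contr, feta B i1 = Int & feta B i2 = Int] /\
    (forall x, x \in fE B ->
       flo B x = (if x == d1 then Some gam else if x == d2 then Some gam
                  else flo A x) /\
       fup B x = (if x == d1 then Some i1 else if x == d2 then Some i2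
                  else if x == e1 then Some i1 else if x == e2 then Some i2
                  else if x == e3 then Some gam else fup A x)).

Definition step_c3 (A B : flow) : Prop :=
  exists gam kap e1 e2 e e3 e4 k1 k2 g3 g4 d13 d14 d23 d24 : nat,
    [/\ gam \in fV A, feta A gam = Contr, kap \in fV A, feta A kap = Cocontr &
        [/\ e1 \in fE A, e2 \in fE A, e \in fE A, e3 \in fE A & e4 \in fE A]] /\
    [/\ flo A e1 = Some gam, flo A e2 = Some gam, e1 != e2, fup A e = Some gam &
        [/\ flo A e = Some kap, fup A e3 = Some kap, fup A e4 = Some kap & e3 != e4]] /\
    frame A B [:: gam; kap] [:: e] [:: k1; k2; g3; g4] [:: d13; d14; d23; d24] /\
    [/\ feta B k1 = Cocontr, feta B k2 = Cocontr, feta B g3 = Contr &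
        feta B g4 = Contr] /\
    (forall x, x \in fE B ->
       fup B x = (if x == d13 then Some k1 else if x == d14 then Some k1
                  else if x == d23 then Some k2 else if x == d24 then Some k2
                  else if x == e3 then Some g3 else if x == e4 then Some g4
                  else fup A x) /\
       flo B x = (if x == d13 then Some g3 else if x == d14 then Some g4
                  else if x == d23 then Some g3 else if x == d24 then Some g4
                  else if x == e1 then Some k1 else if x == e2 then Some k2
                  else flo A x)).

Definition step_c (A B : flow) : Prop := step_c1 A B \/ step_c2 A B \/ step_c3 A B.

Inductive steps_c : flow -> flow -> Prop :=
  | steps_refl A : steps_c A A
  | steps_cons A B C : step_c A B -> steps_c B C -> steps_c A C.

(* Main.v *)
Require Import Defs.
From mathcomp Require Import all_boot zify.
Set Implicit Arguments. Unset Strict Implicit. Unset Printing Implicit Defensive.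

Definition isIC (k : kind) := match k with Int | Cut => true | _ => false end.
Definition st (F : flow) (p : nat * bool) := if p.2 then fup F p.1 else flo F p.1.
Definition en (F : flow) (p : nat * bool) := if p.2 then flo F p.1 else fup F p.1.
Definition tr (F : flow) (p q : nat * bool) : bool :=
  match en F p with
  | Some w => (st F q == Some w) &&
      ((p.2 == q.2) || [&& w \in fV F, isIC (feta F w) & p.1 != q.1])
  | None => false end.
Definition walk F v v' (l : seq (nat*bool)) : Prop :=
  if l is p :: l' then
    [/\ st F p = Some v, en F (last p l') = Some v',
        all (fun q => q.1 \in fE F) l & path (tr F) p l']
  else False.
Definition flip (p : nat*bool) := (p.1, ~~ p.2).

Lemma trP F p q : tr F p q <-> exists w, [/\ en F p = Some w, st F q = Some w &
   (p.2 = q.2 \/ [/\ w \in fV F, isIC (feta F w) & p.1 <> q.1])].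
Proof.
rewrite /tr; split.
  case: (en F p) => // w /andP[/eqP -> H]; exists w; split => //.
  case/orP: H => [/eqP->|/and3P[H1 H2 /eqP H3]]; [by left|by right].
case=> w [-> -> H]; rewrite eqxx /=.
case: H => [->|[H1 H2 H3]]; first by rewrite eqxx.
by apply/orP; right; rewrite H1 H2; apply/eqP.
Qed.

Lemma st_flip F p : st F (flip p) = en F p.
Proof. by case: p => x [] . Qed.
Lemma en_flip F p : en F (flip p) = st F p.
Proof. by case: p => x [] . Qed.
Lemma flipK p : flip (flip p) = p.
Proof. by case: p => x []. Qed.

Lemma tr_flip F p q : tr F (flip q) (flip p) = tr F p q.
Proof.
apply/idP/idP => /trP [w [H1 H2 H3]]; apply/trP; exists w.
  rewrite en_flip in H1; rewrite st_flip in H2; split => //.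
  case: H3 => [E|[? ? E]]; [left|right]; last split => //.
    by move: E; rewrite /flip /=; case: (p.2); case: (q.2).
  by move=> E'; apply: E; rewrite /flip /= E'.
rewrite en_flip st_flip; split => //.
case: H3 => [E|[? ? E]]; [left|right]; last split => //.
  by rewrite /flip /= E.
by move=> /= E'; apply: E.
Qed.

Lemma last_rev_belast (T : Type) (x : T) s : last (last x s) (rev (belast x s)) = x.
Proof.
elim: s x => // y s IH x /=. by rewrite rev_cons last_rcons.
Qed.

Lemma walk_rev F v v' l : walk F v v' l -> walk F v' v (rev (map flip l)).
Proof.
case: l => // p l' [H1 H2 H3 H4].
rewrite lastI map_rcons rev_rcons /=.
rewrite -last_map -belast_map last_rev_belast.
move/allP: H3 => H3.
split.
- by rewrite last_map st_flip.
- by rewrite en_flip.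
- rewrite /= H3 ?mem_last //= belast_map all_rev all_map.
  by apply/allP => q /mem_belast Hq; have := H3 _ Hq.
rewrite rev_path path_map.
by rewrite (@eq_path _ _ (tr F)) // => a b /=; rewrite tr_flip.
Qed.

Definition dn (x : nat) := (x, true).
Definition upo (x : nat) := (x, false).

Lemma walk_cat F v v' p1 m1 p2 m2 :
  walk F v v' (p1 :: m1 ++ p2 :: m2) <->
  exists w, [/\ walk F v w (p1 :: m1), walk F w v' (p2 :: m2) & tr F (last p1 m1) p2].
Proof.
split.
  case=> H1 H2 H3 H4.
  rewrite cat_path /= in H4; case/and3P: H4 => H4 H5 H6.
  have := H5; case/trP => w [E1 E2 _].
  move: H3; rewrite /= all_cat /= => /and3P [H3a H3b H3c].
  exists w; split => //.
    by split => //; rewrite /= H3a.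
  by split => //; rewrite last_cat /= in H2.
case=> w [[H1 H2 H3 H4] [H5 H6 H7 H8] H9].
split => //.
  by rewrite last_cat.
  by move: H3 H7 => /= /andP[Ha Hb] /andP[Hc Hd]; rewrite Ha all_cat Hb /= Hc Hd.
by rewrite cat_path H4 /= H9.
Qed.

Lemma down_walk F v v' s : down_path F v v' s <-> walk F v v' (map dn s).
Proof.
have E : relpre dn (tr F) =2 (fun x y => (flo F x != None) && (flo F x == fup F y)).
  move=> a b; rewrite /tr /en /st /=.
  by case: (flo F a) => [w|] //=; rewrite ?orbT ?andbT eq_sym.
case: s => [|x s] //=.
rewrite last_map path_map (eq_path E) all_map.
by [].
Qed.

Lemma mono_eq b (s : seq (nat * bool)) : all (fun q => q.2 == b) s -> s = map (fun x => (x, b)) (map fst s).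
Proof. elim: s => // [[x c]] s IH /= /andP[/eqP -> /IH {1}->]. by []. Qed.

Lemma walk_mono F v v' p l : walk F v v' (p :: l) -> all (fun q => q.2 == p.2) l ->
  flow_path F v v' (map fst (p :: l)).
Proof.
move=> W Hl.
have Hall : all (fun q => q.2 == p.2) (p :: l) by rewrite /= eqxx Hl.
have : walk F v v' (map (fun x => (x, p.2)) (map fst (p :: l))) by rewrite -(mono_eq Hall).
move: (map fst (p :: l)) => t.
case: p {Hall Hl W} => x [] W.
  by left; apply/down_walk.
right; apply/down_walk.
have := walk_rev W.
have -> : rev [seq flip i | i <- [seq (x0, false) | x0 <- t]] = map dn (rev t).
  by rewrite map_rev -map_comp.
by [].
Qed.

Lemma map_fst_dn s : map fst (map dn s) = s.
Proof. by elim: s => //= x s ->. Qed.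

Lemma ai_walk F v v' s : ai_path F v v' s -> exists l, walk F v v' l /\ map fst l = s.
Proof.
elim=> {v v' s}.
  move=> v v' s [H|H].
    by exists (map dn s); split; [apply/down_walk | apply: map_fst_dn].
  exists (rev (map flip (map dn (rev s)))); split.
    by apply: walk_rev; apply/down_walk.
  by rewrite -!map_rev revK; elim: s {H} => //= x s ->.
move=> v w v' s1 s2 _ [l1 [W1 E1]] _ [l2 [W2 E2]] Hk Hw Hl.
case: l1 W1 E1 => [[]|p1 m1] W1 E1.
case: l2 W2 E2 => [|p2 m2] W2 E2; first by case: W2.
exists (p1 :: m1 ++ p2 :: m2); split; last by rewrite -E1 -E2 -map_cat.
apply/walk_cat; exists w; split => //; apply/trP; exists w.
case: W1 => _ -> _ _; case: W2 => -> _ _ _; split => //; right; split => //.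
  by case: Hk => ->.
move=> E; apply: Hl; rewrite -E1 -E2 /=.
by rewrite (last_map fst m1 p1) E.
Qed.

Lemma split_notall (T : Type) (P : pred T) s : ~~ all P s ->
  exists s1 x s2, [/\ s = s1 ++ x :: s2, all P s1 & ~~ P x].
Proof.
elim: s => //= x s IH; case Px: (P x) => /= H.
  have [s1 [y [s2 [-> H1 H2]]]] := IH H.
  by exists (x :: s1), y, s2; rewrite /= Px H1.
by exists [::], x, s; rewrite Px.
Qed.

Lemma last_all b (p : nat * bool) m : all (fun q => q.2 == b) m -> (last p m).2 = b \/ m = [::].
Proof.
elim: m p => [|r m IH] p /=; first by right.
case/andP=> /eqP Hr Hm; left; case: (IH r Hm) => // ->. by [].
Qed.

Lemma last_all' (p : nat * bool) m : all (fun q => q.2 == p.2) m -> (last p m).2 = p.2.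
Proof. by case/(last_all p) => // ->. Qed.

Lemma walk_ai_n F n : forall l v v', size l <= n -> walk F v v' l -> ai_path F v v' (map fst l).
Proof.
elim: n => [|n IH] [|p l'] v v' //= Hs W.
case Hall: (all (fun q => q.2 == p.2) l').
  by apply: ai_base; apply: walk_mono.
have [m1 [q [m2 [El Hm1 Hq]]]] := split_notall (negbT Hall).
rewrite El in W Hs *.
case/walk_cat: W => w [W1 W2 T].
have Hlast : (last p m1).2 = p.2 by apply: last_all'.
case/trP: T => w' [E1 E2 H].
have Ew : w' = w by case: W1 => _; rewrite E1 => -[].
subst w'.
case: H => [H|[H1 H2 H3]]; first by rewrite -H Hlast eqxx in Hq.
rewrite map_cat -cat_cons; apply: ai_join (IH _ _ _ _ W1) (IH _ _ _ _ W2) _ H1 _.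
- by move: Hs; rewrite /= size_cat /=; lia.
- by move: Hs; rewrite /= size_cat /=; lia.
- by move: H2; case: (feta F w) => //; auto.
- by rewrite /= (last_map fst m1 p).
Qed.

Lemma walk_ai F v v' l : walk F v v' l -> ai_path F v v' (map fst l).
Proof. exact: walk_ai_n. Qed.

Definition ends_in F :=
  (forall e v, e \in fE F -> fup F e = Some v -> v \in fV F) /\
  (forall e v, e \in fE F -> flo F e = Some v -> v \in fV F).

Lemma dup_split (l : seq (nat * bool)) : ~~ uniq (map fst l) ->
  exists a p b q c, l = a ++ p :: b ++ q :: c /\ p.1 = q.1.
Proof.
elim: l => //= p l IH; rewrite negb_and negbK; case/orP => [H|H].
  case/mapP: H => q Hq Eq.
  case/splitPr: Hq => b c.
  by exists [::], p, b, q, c.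
have [a [p' [b [q [c [-> E]]]]]] := IH H.
by exists (p :: a), p', b, q, c.
Qed.

Lemma walk_suffix F v v' a x m : walk F v v' (a ++ x :: m) -> exists w, walk F w v' (x :: m).
Proof.
case: a => [|y a] W; first by exists v.
have /walk_cat [w [_ W2 _]] := W. by exists w.
Qed.

Lemma walk_st F v v' p m : walk F v v' (p :: m) -> st F p = Some v.
Proof. by case. Qed.
Lemma walk_en F v v' p m : walk F v v' (p :: m) -> en F (last p m) = Some v'.
Proof. by case. Qed.

Lemma closed_walk_n F n : ends_in F -> forall l v, size l <= n -> walk F v v l ->
  exists u s, ai_cycle F u s.
Proof.
move=> [HE1 HE2]; elim: n => [|n IH] l v Hs W; first by case: l Hs W.
case U: (uniq (map fst l)).
  exists v, (map fst l); split; last by split => //; apply: walk_ai.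
  case: l W {Hs U} => // p l [H1 _ /andP[H3 _] _].
  by move: H1; rewrite /st; case: (p.2); [apply: HE1|apply: HE2].
have [a [p [b [q [c [El E]]]]]] := dup_split (negbT U).
subst l.
have [w W'] := walk_suffix W.
have Hs' : size (b ++ q :: c) < n.+1.
  by move: Hs; rewrite size_cat /= size_cat /=; lia.
clear W U Hs; case: p q E W' Hs' => [x bp] [y bq] /= Exy W' Hs'; subst y.
case Eb: (bp == bq); move/eqP: Eb => Eb.
  subst bq.
  case/walk_cat: W' => w' [W1 W2 T].
  case/trP: T => u [E1 E2 _].
  have Hw : w = u by move: (walk_st W1); rewrite E2 => -[].
  have Hw' : w' = u by move: (walk_en W1); rewrite E1 => -[].
  subst w w'.
  apply: (IH ((x, bp) :: b) u) => //.
  by move: Hs'; rewrite size_cat /=; lia.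
case: b W' Hs' => [|r b] W' Hs'.
  move: W' => [_ _ _ /= /andP[T _]].
  case/trP: T => u [_ _ [/= H|[_ _ H]]] //.
have := walk_cat F w v (x, bp) [::] r (b ++ (x, bq) :: c).
case=> H _; case: (H W') => w1 [W1 W2 T1] {H}.
case/walk_cat: W2 => w2 [W3 W4 T2].
case/trP: T1 => u1 [E1 E2 _]; case/trP: T2 => u2 [E3 E4 _].
apply: (IH (r :: b) u1) => //.
  by move: Hs'; rewrite /= size_cat /=; lia.
have Eqs : st F (x, bq) = en F (x, bp).
  by move: Eb; rewrite /st /en /=; case: (bp); case: (bq).
have Hw1 : w1 = u1 by move: (walk_st W3); rewrite E2 => -[].
have Hw2 : w2 = u1.
  move: (walk_en W3); rewrite E3 => -[<-].
  by move: E4 E1; rewrite Eqs /= => -> [].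
by subst w1 w2.
Qed.

Lemma sim F G (f : nat -> nat) (g : nat * bool -> nat * bool) :
  ends_in G ->
  (forall p, p.1 \in fE F -> [/\ (g p).1 \in fE G, st G (g p) = omap f (st F p)
                               & en G (g p) = omap f (en F p)]) ->
  (forall p q, p.1 \in fE F -> q.1 \in fE F -> tr F p q -> tr G (g p) (g q)) ->
  cycle_free G -> cycle_free F.
Proof.
move=> HE H1 H2 CG [v [s [Hv [Hp Hu]]]].
have [l0 [W _]] := ai_walk Hp; case: l0 W => [[]|p l] W.
apply: CG; apply: (@closed_walk_n G _ HE (map g (p :: l)) (f v) (leqnn _)).
case: W => E1 E2 E3 E4.
have /allP E3' := E3.
have [Hg1 Hg2 Hg3] := H1 p (E3' p (mem_head _ _)).
rewrite [walk _ _ _ _]/=.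
split.
- by rewrite Hg2 E1.
- rewrite last_map; have [_ _ ->] := H1 (last p l) (E3' _ (mem_last _ _)).
  by rewrite E2.
- rewrite Hg1 /= all_map; apply/allP => q Hq /=.
  by have [] := H1 q (E3' q (mem_behead (s := p :: l) Hq)).
rewrite path_map.
apply: (sub_in_path (P := fun q : nat * bool => q.1 \in fE F)) E3 E4.
by move=> a b Ha Hb /= T; apply: H2.
Qed.

Definition Inv F := ends_in F /\ forall v, v \in fV F -> exists Lu Ld : seq nat,
  [/\ uniq Lu, uniq Ld, size Lu = (arity (feta F v)).1, size Ld = (arity (feta F v)).2 &
   [/\ {subset Lu <= fE F}, {subset Ld <= fE F},
       (forall x, x \in fE F -> (flo F x == Some v) = (x \in Lu)) &
       (forall x, x \in fE F -> (fup F x == Some v) = (x \in Ld))]].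

Lemma is_flow_Inv A : is_flow A -> Inv A.
Proof.
case=> _ U H1 H2 [H3 _ _]; split; first by split.
move=> v Hv; have := H3 v Hv; case: (arity (feta A v)) => a b [<- <-].
exists [seq x <- fE A | flo A x == Some v], [seq x <- fE A | fup A x == Some v].
rewrite !size_filter; split; rewrite ?filter_uniq //.
split.
- by move=> x; rewrite mem_filter => /andP[].
- by move=> x; rewrite mem_filter => /andP[].
- by move=> x Hx; rewrite mem_filter Hx andbT.
- by move=> x Hx; rewrite mem_filter Hx andbT.
Qed.

Lemma L2 (L : seq nat) a b x : size L = 2 -> a \in L -> b \in L -> a != b -> x \in L -> x = a \/ x = b.
Proof.
case: L => [|y [|z [|]]] //= _; rewrite !inE.
move=> /orP[/eqP->|/eqP->] /orP[/eqP->|/eqP->]; rewrite ?eqxx //= => _ /orP[/eqP->|/eqP->]; auto.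
Qed.

Lemma L1 (L : seq nat) a x : size L = 1 -> a \in L -> x \in L -> x = a.
Proof. by case: L => [|y [|]] //= _; rewrite !inE => /eqP-> /eqP. Qed.

Lemma L0 (L : seq nat) x : size L = 0 -> x \in L -> False.
Proof. by case: L. Qed.

Section C1.
Variables (A B : flow) (gam kap e1 e2 e e3 nu k1 k2 d1 d2 : nat).
Hypothesis IA : Inv A.
Hypothesis H0 : [/\ gam \in fV A, feta A gam = Contr, kap \in fV A, feta A kap = Cut &
        [/\ e1 \in fE A, e2 \in fE A, e \in fE A, e3 \in fE A & e1 != e2 ]].
Hypothesis H1 : [/\ flo A e1 = Some gam, flo A e2 = Some gam, fup A e = Some gam,
        flo A e = Some kap & (e3 != e /\ flo A e3 = Some kap)].
Hypothesis HF : frame A B [:: gam; kap] [:: e] [:: nu; k1; k2] [:: d1; d2].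
Hypothesis HL : [/\ feta B nu = Cocontr, feta B k1 = Cut & feta B k2 = Cut].
Hypothesis HS : forall x, x \in fE B ->
       fup B x = (if x == d1 then Some nu else if x == d2 then Some nu
                  else fup A x) /\
       flo B x = (if x == d1 then Some k1 else if x == d2 then Some k2
                  else if x == e1 then Some k1 else if x == e2 then Some k2
                  else if x == e3 then Some nu else flo A x).

Lemma gk : gam != kap.
Proof. by case: H0 => _ Hg _ Hk _; apply/eqP => E; rewrite E Hk in Hg. Qed.

Lemma Ag1 x : x \in fE A -> flo A x = Some gam -> x = e1 \/ x = e2.
Proof.
case: IA => _ /(_ gam) []; first by case: H0.
move=> Lu [Ld [U1 U2 S1 S2 [_ _ M1 M2]]] Hx Ex.
case: H0 H1 => _ Hg _ _ [He1 He2 _ _ N] [F1 F2 _ _ _].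
move: S1; rewrite Hg /= => S1.
apply: (L2 S1); rewrite -?M1 ?F1 ?F2 ?Ex //.
Qed.

Lemma Ag2 x : x \in fE A -> fup A x = Some gam -> x = e.
Proof.
case: IA => _ /(_ gam) []; first by case: H0.
move=> Lu [Ld [U1 U2 S1 S2 [_ _ M1 M2]]] Hx Ex.
case: H0 H1 => _ Hg _ _ [He1 He2 He _ N] [F1 F2 F3 _ _].
move: S2; rewrite Hg /= => S2.
by apply: (L1 S2); rewrite -?M2 ?F3 ?Ex.
Qed.

Lemma Ak1 x : x \in fE A -> flo A x = Some kap -> x = e \/ x = e3.
Proof.
case: IA => _ /(_ kap) []; first by case: H0.
move=> Lu [Ld [U1 U2 S1 S2 [_ _ M1 M2]]] Hx Ex.
case: H0 H1 => _ _ _ Hk [He1 He2 He He3 N] [F1 F2 F3 F4 [N3 F5]].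
move: S1; rewrite Hk /= => S1.
apply: (L2 S1).
- by rewrite -M1 // F4.
- by rewrite -M1 // F5.
- by rewrite eq_sym.
- by rewrite -M1 // Ex.
Qed.

Lemma Ak2 x : x \in fE A -> fup A x = Some kap -> False.
Proof.
case: IA => _ /(_ kap) []; first by case: H0.
move=> Lu [Ld [U1 U2 S1 S2 [_ _ M1 M2]]] Hx Ex.
case: H0 => _ _ _ Hk _; rewrite Hk /= in S2.
by apply: (L0 S2 (x := x)); rewrite -M2 ?Ex.
Qed.

Lemma ne_e1e : e1 != e.
Proof.
case: H1 => F1 _ _ F4 _; apply/eqP => E; move: F1; rewrite E F4 => -[E'].
by move: gk; rewrite E' eqxx.
Qed.
Lemma ne_e2e : e2 != e.
Proof.
case: H1 => _ F1 _ F4 _; apply/eqP => E; move: F1; rewrite E F4 => -[E'].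
by move: gk; rewrite E' eqxx.
Qed.
Lemma ne_e3e1 : e3 != e1.
Proof.
case: H1 => F1 _ _ _ [_ F5]; apply/eqP => E; move: F1; rewrite -E F5 => -[E'].
by move: gk; rewrite E' eqxx.
Qed.
Lemma ne_e3e2 : e3 != e2.
Proof.
case: H1 => _ F1 _ _ [_ F5]; apply/eqP => E; move: F1; rewrite -E F5 => -[E'].
by move: gk; rewrite E' eqxx.
Qed.
Lemma ne_e1e2 : e1 != e2.
Proof. by case: H0 => _ _ _ _ []. Qed.
Lemma ne_e3e : e3 != e.
Proof. by case: H1 => _ _ _ _ []. Qed.

Definition K v := [&& v \in fV A, v != gam & v != kap].

Lemma Knot : [/\ ~~ K nu, ~~ K k1 & ~~ K k2].
Proof.
case: HF => _ _ HnV _ _.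
move: HnV; rewrite /= !andbT /K !inE => /and3P[N1 N2 N3].
split.
- by move: N1; case: (nu \in fV A); case: (nu == gam); case: (nu == kap).
- by move: N2; case: (k1 \in fV A); case: (k1 == gam); case: (k1 == kap).
- by move: N3; case: (k2 \in fV A); case: (k2 == gam); case: (k2 == kap).
Qed.

Lemma Knew v : K v -> [/\ v != nu, v != k1 & v != k2].
Proof.
case: Knot => N1 N2 N3 Kv.
by split; apply/eqP => E; subst v; [move: N1|move: N2|move: N3]; rewrite Kv.
Qed.

Lemma new_dist : [/\ nu != k1, nu != k2 & k1 != k2].
Proof. by case: HF => /= U _ _ _ _; move: U; rewrite !inE negb_or => /and3P[/andP[]]. Qed.

Lemma d12 : d1 != d2.
Proof. by case: HF => _ /= U _ _ _; move: U; rewrite !inE andbT. Qed.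

Lemma dA x : (x == d1) || (x == d2) -> x \in fE A -> x = e.
Proof.
case: HF => _ _ _ HnE _ Hx Hx'.
move: HnE; rewrite /= !andbT => /andP[N1 N2].
by case/orP: Hx => /eqP E; subst x; [move: N1|move: N2]; rewrite Hx' /= inE => /eqP.
Qed.

Lemma memB x : (x \in fE B) = ((x \in fE A) && (x != e)) || ((x == d1) || (x == d2)).
Proof. by case: HF => _ _ _ _ [_ _ _ -> _]; rewrite !inE. Qed.

Lemma memVB v : (v \in fV B) = K v || [|| v == nu, v == k1 | v == k2].
Proof. by case: HF => _ _ _ _ [_ _ -> _ _]; rewrite !inE /K negb_or andbA. Qed.

Lemma etaB v : K v -> feta B v = feta A v.
Proof.
case: HF => _ _ _ _ [_ _ _ _ H] /and3P[Hv Hg Hk].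
by apply: H => //; rewrite !inE negb_or Hg Hk.
Qed.

Lemma dne x : x \in fE A -> x != e -> (x != d1) && (x != d2).
Proof.
move=> Hx Ne; apply/negP => /negP; rewrite negb_and !negbK => H.
by move: Ne; rewrite (dA H Hx) eqxx.
Qed.

Lemma inA : [/\ e1 \in fE A, e2 \in fE A, e \in fE A & e3 \in fE A].
Proof. by case: H0 => _ _ _ _ []. Qed.

Lemma inB : [/\ e1 \in fE B, e2 \in fE B, e3 \in fE B, d1 \in fE B & d2 \in fE B].
Proof.
case: inA => ? ? ? ?.
have := ne_e1e; have := ne_e2e; have := ne_e3e => ? ? ?.
by split; rewrite memB ?eqxx ?orbT //; apply/orP; left; apply/andP.
Qed.

Lemma dnes1 : (e1 == d1) = false /\ (e1 == d2) = false.
Proof. by case: inA => ? ? ? ?; have /andP[/negbTE -> /negbTE ->] := dne (x := e1) ltac:(done) ne_e1e. Qed.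
Lemma dnes2 : (e2 == d1) = false /\ (e2 == d2) = false.
Proof. by case: inA => ? ? ? ?; have /andP[/negbTE -> /negbTE ->] := dne (x := e2) ltac:(done) ne_e2e. Qed.
Lemma dnes3 : (e3 == d1) = false /\ (e3 == d2) = false.
Proof. by case: inA => ? ? ? ?; have /andP[/negbTE -> /negbTE ->] := dne (x := e3) ltac:(done) ne_e3e. Qed.

Lemma sd1 : fup B d1 = Some nu /\ flo B d1 = Some k1.
Proof. by case: inB => _ _ _ H _; have := HS H; rewrite eqxx. Qed.
Lemma sd2 : fup B d2 = Some nu /\ flo B d2 = Some k2.
Proof.
case: inB => _ _ _ _ H; have := HS H; rewrite eqxx.
by rewrite eq_sym (negbTE d12).
Qed.
Lemma se1 : fup B e1 = fup A e1 /\ flo B e1 = Some k1.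
Proof. by case: inB => H _ _ _ _; have := HS H; case: dnes1 => -> ->; rewrite eqxx. Qed.
Lemma se2 : fup B e2 = fup A e2 /\ flo B e2 = Some k2.
Proof.
case: inB => _ H _ _ _; have := HS H; case: dnes2 => -> ->; rewrite eqxx.
by rewrite eq_sym (negbTE ne_e1e2).
Qed.
Lemma se3 : fup B e3 = fup A e3 /\ flo B e3 = Some nu.
Proof.
case: inB => _ _ H _ _; have := HS H; case: dnes3 => -> ->; rewrite eqxx.
by rewrite (negbTE ne_e3e1) (negbTE ne_e3e2).
Qed.

Definition oth x := (x \in fE A) && (x \notin [:: e; e1; e2; e3; d1; d2]).

Lemma oth_ne x : oth x -> [/\ x \in fE A, x != e, x != e1, x != e2 & [/\ x != e3, x != d1 & x != d2]].
Proof.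
case/andP=> Hx; rewrite !inE !negb_or.
by case/andP=> ? /andP[? /andP[? /andP[? /andP[? ?]]]].
Qed.

Lemma sot x : oth x -> x \in fE B /\ fup B x = fup A x /\ flo B x = flo A x.
Proof.
case/oth_ne=> Hx Ne N1 N2 [N3 N4 N5].
have HxB : x \in fE B by rewrite memB Hx Ne.
by have := HS HxB; rewrite (negbTE N1) (negbTE N2) (negbTE N3) (negbTE N4) (negbTE N5).
Qed.

Lemma classify x : x \in fE B -> [\/ x = d1, x = d2, x = e1 | [\/ x = e2, x = e3 | oth x]].
Proof.
rewrite memB => H.
have [->|N1] := eqVneq x d1; first by constructor 1.
have [->|N2] := eqVneq x d2; first by constructor 2.
have [->|N3] := eqVneq x e1; first by constructor 3.
have [->|N4] := eqVneq x e2; first by constructor 4; constructor 1.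
have [->|N5] := eqVneq x e3; first by constructor 4; constructor 2.
constructor 4; constructor 3; move: H; rewrite (negbTE N1) (negbTE N2) /= orbF => /andP[Hx Ne].
by rewrite /oth Hx !inE !negb_or Ne N1 N2 N3 N4 N5.
Qed.

Definition okopt (o : option nat) := if o is Some v then K v else true.

Lemma ok_e1 : okopt (fup A e1).
Proof.
case: inA => He1 _ _ _.
case E: (fup A e1) => [v|] //=; apply/and3P; split.
- by case: IA => [[HE _] _]; apply: HE E.
- by apply/eqP => Ev; subst v; have := Ag2 He1 E; apply/eqP; exact: ne_e1e.
- by apply/eqP => Ev; subst v; apply: (Ak2 He1 E).
Qed.
Lemma ok_e2 : okopt (fup A e2).
Proof.
case: inA => _ He1 _ _.
case E: (fup A e2) => [v|] //=; apply/and3P; split.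
- by case: IA => [[HE _] _]; apply: HE E.
- by apply/eqP => Ev; subst v; have := Ag2 He1 E; apply/eqP; exact: ne_e2e.
- by apply/eqP => Ev; subst v; apply: (Ak2 He1 E).
Qed.
Lemma ok_e3 : okopt (fup A e3).
Proof.
case: inA => _ _ _ He1.
case E: (fup A e3) => [v|] //=; apply/and3P; split.
- by case: IA => [[HE _] _]; apply: HE E.
- by apply/eqP => Ev; subst v; have := Ag2 He1 E; apply/eqP; exact: ne_e3e.
- by apply/eqP => Ev; subst v; apply: (Ak2 He1 E).
Qed.
Lemma ok_oth x : oth x -> okopt (fup A x) /\ okopt (flo A x).
Proof.
case/oth_ne=> Hx Ne N1 N2 [N3 _ _].
split.
  case E: (fup A x) => [v|] //=; apply/and3P; split.
  - by case: IA => [[HE _] _]; apply: HE E.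
  - by apply/eqP => Ev; subst v; have := Ag2 Hx E; apply/eqP.
  - by apply/eqP => Ev; subst v; apply: (Ak2 Hx E).
case E: (flo A x) => [v|] //=; apply/and3P; split.
- by case: IA => [[_ HE] _]; apply: HE E.
- apply/eqP => Ev; subst v; case: (Ag1 Hx E) => Ex; subst x.
    by rewrite eqxx in N1.
  by rewrite eqxx in N2.
- apply/eqP => Ev; subst v; case: (Ak1 Hx E) => Ex; subst x.
    by rewrite eqxx in Ne.
  by rewrite eqxx in N3.
Qed.

Definition f v := if v == nu then kap else if v == k1 then gam else if v == k2 then gam else v.
Definition g (p : nat * bool) := if (p.1 == d1) || (p.1 == d2) then (e, ~~ p.2) else p.

Lemma fK v : K v -> f v = v.
Proof. by case/Knew => N1 N2 N3; rewrite /f (negbTE N1) (negbTE N2) (negbTE N3). Qed.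
Lemma omapK o : okopt o -> omap f o = o.
Proof. by case: o => //= v /fK ->. Qed.
Lemma fnew : [/\ f nu = kap, f k1 = gam & f k2 = gam].
Proof.
case: new_dist => N1 N2 N3.
by rewrite /f eqxx eq_sym (negbTE N1) eqxx eq_sym (negbTE N2) eq_sym (negbTE N3) eqxx.
Qed.

Lemma gd1 b : g (d1, b) = (e, ~~ b).
Proof. by rewrite /g /= eqxx. Qed.
Lemma gd2 b : g (d2, b) = (e, ~~ b).
Proof. by rewrite /g /= eqxx orbT. Qed.
Lemma gid x b : x != d1 -> x != d2 -> g (x, b) = (x, b).
Proof. by move=> N1 N2; rewrite /g /= (negbTE N1) (negbTE N2). Qed.
Lemma ge b : [/\ g (e1, b) = (e1, b), g (e2, b) = (e2, b) & g (e3, b) = (e3, b)].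
Proof. by case: dnes1 => A1 A2; case: dnes2 => A3 A4; case: dnes3 => A5 A6; rewrite /g /= A1 A2 A3 A4 A5 A6. Qed.

Lemma S1 p : p.1 \in fE B ->
  [/\ (g p).1 \in fE A, st A (g p) = omap f (st B p) & en A (g p) = omap f (en B p)].
Proof.
case: p => x b /= Hx.
case: inA => I1 I2 Ie I3.
case: fnew => Fn Fk1 Fk2.
case: H1 => F1 F2 Fe Fe' [_ F3].
case: (classify Hx) => [->|->|->|[->|->|Ho]].
- rewrite gd1; case: sd1 => U L.
  by case: b; split; rewrite /st /en /= ?U ?L /= ?Fn ?Fk1 ?Fe ?Fe'.
- rewrite gd2; case: sd2 => U L.
  by case: b; split; rewrite /st /en /= ?U ?L /= ?Fn ?Fk2 ?Fe ?Fe'.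
- case: (ge b) => -> _ _; case: se1 => U L; have O := omapK ok_e1.
  by case: b; split; rewrite /st /en /= ?U ?L ?O ?F1 //= ?Fk1.
- case: (ge b) => _ -> _; case: se2 => U L; have O := omapK ok_e2.
  by case: b; split; rewrite /st /en /= ?U ?L ?O ?F2 //= ?Fk2.
- case: (ge b) => _ _ ->; case: se3 => U L; have O := omapK ok_e3.
  by case: b; split; rewrite /st /en /= ?U ?L ?O ?F3 //= ?Fn.
- have [_ _ _ _ [_ N1 N2]] := oth_ne Ho.
  rewrite gid //; case: (sot Ho) => _ [U L]; case: (ok_oth Ho) => O1 O2.
  have [HA _ _ _ _] := oth_ne Ho.
  by case: b; split; rewrite /st /en /= ?U ?L ?(omapK O1) ?(omapK O2).
Qed.

Lemma endB x b w : x \in fE B -> en B (x, b) = Some w ->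
  [\/ [/\ K w, x != d1, x != d2 & en A (x, b) = Some w],
      w = nu /\ (x, b) \in [:: (e3, true); (d1, false); (d2, false)],
      w = k1 /\ (x, b) \in [:: (e1, true); (d1, true)] |
      w = k2 /\ (x, b) \in [:: (e2, true); (d2, true)]].
Proof.
move=> Hx.
case: (classify Hx) => [->|->|->|[->|->|Ho]].
- case: sd1 => U L; case: b; rewrite /en /= ?U ?L => -[<-].
    by constructor 3; rewrite !inE eqxx orbT.
  by constructor 2; rewrite !inE eqxx !orbT.
- case: sd2 => U L; case: b; rewrite /en /= ?U ?L => -[<-].
    by constructor 4; rewrite !inE eqxx orbT.
  by constructor 2; rewrite !inE eqxx !orbT.
- case: se1 => U L; case: dnes1 => N1 N2; case: b; rewrite /en /= ?U ?L.
    by move=> [<-]; constructor 3; rewrite !inE eqxx.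
  move=> E; constructor 1; split; rewrite ?N1 ?N2 //.
  by have := ok_e1; rewrite E.
- case: se2 => U L; case: dnes2 => N1 N2; case: b; rewrite /en /= ?U ?L.
    by move=> [<-]; constructor 4; rewrite !inE eqxx.
  move=> E; constructor 1; split; rewrite ?N1 ?N2 //.
  by have := ok_e2; rewrite E.
- case: se3 => U L; case: dnes3 => N1 N2; case: b; rewrite /en /= ?U ?L.
    by move=> [<-]; constructor 2; rewrite !inE eqxx.
  move=> E; constructor 1; split; rewrite ?N1 ?N2 //.
  by have := ok_e3; rewrite E.
- have [_ _ _ _ [_ N1 N2]] := oth_ne Ho.
  case: (sot Ho) => _ [U L]; case: (ok_oth Ho) => O1 O2.
  case: b; rewrite /en /= ?U ?L => E; constructor 1; split => //.
    by move: O2; rewrite E.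
  by move: O1; rewrite E.
Qed.

Lemma startB x b w : x \in fE B -> st B (x, b) = Some w ->
  [\/ [/\ K w, x != d1, x != d2 & st A (x, b) = Some w],
      w = nu /\ (x, b) \in [:: (e3, false); (d1, true); (d2, true)],
      w = k1 /\ (x, b) \in [:: (e1, false); (d1, false)] |
      w = k2 /\ (x, b) \in [:: (e2, false); (d2, false)]].
Proof.
move=> Hx E; have E' : en B (x, ~~ b) = Some w by case: (b) E.
case: (endB Hx E') => [[H1' H2' H3' H4']|[? M]|[? M]|[? M]].
- by constructor 1; split => //; case: (b) H4'.
- by constructor 2; split => //; case: (b) M; rewrite !inE !xpair_eqE /= ?andbT ?andbF ?orbF.
- by constructor 3; split => //; case: (b) M; rewrite !inE !xpair_eqE /= ?andbT ?andbF ?orbF.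
- by constructor 4; split => //; case: (b) M; rewrite !inE !xpair_eqE /= ?andbT ?andbF ?orbF.
Qed.

Lemma S2 p q : p.1 \in fE B -> q.1 \in fE B -> tr B p q -> tr A (g p) (g q).
Proof.
case: p q => x b [y c] /= Hp Hq /trP [w [E1 E2 C]].
have [_ _ Ep] := S1 (p := (x, b)) Hp; have [_ Sq _] := S1 (p := (y, c)) Hq.
apply/trP; exists (f w); split; [by rewrite Ep E1 | by rewrite Sq E2 |].
case: fnew => Fn Fk1 Fk2; case: HL => Ln Lk1 Lk2; case: Knot => Kn Kk1 Kk2.
case: new_dist => D1 D2 D3.
case: H0 => _ _ Hk Hkc _.
have n3 : e3 <> e by apply/eqP; exact: ne_e3e.
have n3' : e <> e3 by apply/eqP; rewrite eq_sym; exact: ne_e3e.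
case: (ge true) => G1t G2t G3t; case: (ge false) => G1f G2f G3f.
case: (endB Hp E1) => [[Kw N1 N2 _]|[Hw Mp]|[Hw Mp]|[Hw Mp]];
case: (startB Hq E2) => [[Kw' N1' N2' _]|[Hw' Mq]|[Hw' Mq]|[Hw' Mq]];
  try subst w;
  try (by rewrite ?Kw ?Kw' in Kn Kk1 Kk2);
  try (by move: D1 D2 D3; rewrite ?Hw' ?Hw eqxx).
- rewrite !gid // fK //.
  case: C => [->|[Hv Hic Hne]]; [by left|right; split => //].
    by case/and3P: Kw.
  by rewrite -etaB.
- have Cb : b = c by case: C => // -[_]; rewrite Ln.
  subst c; rewrite Fn.
  move: Mp Mq; rewrite !inE !xpair_eqE.
  case: b {C E1 E2 Ep Sq} => /=; rewrite ?andbT ?andbF ?orbF /=.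
    move=> /eqP -> /orP[] /eqP ->; rewrite ?G3t ?gd1 ?gd2 /=; by right; rewrite Hkc.
  move=> /orP[] /eqP -> /eqP ->; rewrite ?G3f ?gd1 ?gd2 /=; by right; rewrite Hkc.
- move: Mp Mq; rewrite !inE !xpair_eqE.
  case: b c C {E1 E2 Ep Sq} => [] [] C /=; rewrite ?andbT ?andbF ?orbF /= => //;
  try (by case: C).
  case: C => // -[_ _]; move=> Hne /orP[] /eqP Ex /orP[] /eqP Ey; subst x y => //;
  by rewrite ?G1t ?G1f ?gd1 /=; left.
- move: Mp Mq; rewrite !inE !xpair_eqE.
  case: b c C {E1 E2 Ep Sq} => [] [] C /=; rewrite ?andbT ?andbF ?orbF /= => //;
  try (by case: C).
  case: C => // -[_ _]; move=> Hne /orP[] /eqP Ex /orP[] /eqP Ey; subst x y => //;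
  by rewrite ?G2t ?G2f ?gd2 /=; left.
Qed.

Lemma c1_cf : cycle_free A -> cycle_free B.
Proof.
apply: (sim (f := f) (g := g)); [by case: IA | exact: S1 | exact: S2].
Qed.

Lemma c1_ends : ends_in B.
Proof.
split=> x v Hx E.
- have E' : en B (x, false) = Some v by [].
  rewrite memVB; case: (endB Hx E') => [[-> _ _ _]|[-> _]|[-> _]|[-> _]] //;
  by rewrite eqxx ?orbT.
- have E' : en B (x, true) = Some v by [].
  rewrite memVB; case: (endB Hx E') => [[-> _ _ _]|[-> _]|[-> _]|[-> _]] //;
  by rewrite eqxx ?orbT.
Qed.

Lemma memd y : y \in fE B -> y != d1 -> y != d2 -> y \in fE A.
Proof. by rewrite memB => /orP[/andP[]//|/orP[/eqP E|/eqP E]] N1 N2; [move: N1|move: N2]; rewrite E eqxx. Qed.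

Lemma c1_Inv : Inv B.
Proof.
split; first exact: c1_ends.
case: fnew => Fn Fk1 Fk2; case: HL => Ln Lk1 Lk2; case: Knot => Kn Kk1 Kk2.
case: new_dist => D1 D2 D3.
case: H1 => F1 F2 Fe Fe' [_ F3].
case: inB => B1 B2 B3 Bd1 Bd2.
have Hcontra : forall w, K w -> [/\ w != nu, w != k1, w != k2, w != gam & w != kap].
  by move=> w Kw; case: (Knew Kw) => ? ? ?; case/and3P: Kw.
move=> v; rewrite memVB => /orP[Kv|/or3P[/eqP->|/eqP->|/eqP->]].
- have [Nn Nk1 Nk2 Ng Nk] := Hcontra v Kv.
  case: IA => _ /(_ v) []; first by case/and3P: Kv.
  move=> Lu [Ld [U1 U2 S1' S2' [Sub1 Sub2 M1 M2]]].
  exists Lu, Ld; rewrite etaB //; split => //; split.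
  + move=> y Hy; have Hy' := Sub1 _ Hy; have := M1 _ Hy'; rewrite Hy => /eqP E.
    rewrite memB Hy' /=; apply/orP; left; apply/eqP => Ey; subst y.
    by move: E; rewrite Fe' => -[Ev]; rewrite Ev eqxx in Nk.
  + move=> y Hy; have Hy' := Sub2 _ Hy; have := M2 _ Hy'; rewrite Hy => /eqP E.
    rewrite memB Hy' /=; apply/orP; left; apply/eqP => Ey; subst y.
    by move: E; rewrite Fe => -[Ev]; rewrite Ev eqxx in Ng.
  + move=> y Hy; apply/idP/idP.
      move/eqP => E; have E' : en B (y, true) = Some v by [].
      case: (endB Hy E') => [[_ N1 N2 EA]|[Hw _]|[Hw _]|[Hw _]];
        try (by rewrite Hw eqxx in Nn Nk1 Nk2).
      have EA' : flo A y = Some v by [].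
      by rewrite -M1 ?EA' ?eqxx //; apply: memd.
    move=> Hy'; have HyA := Sub1 _ Hy'; rewrite -M1 // in Hy'; move/eqP: Hy' => E.
    case: (classify Hy) => [Ey|Ey|Ey|[Ey|Ey|Ho]]; try subst y.
    * by rewrite (dA _ HyA) ?eqxx // Fe' in E; case: E => Ev; rewrite Ev eqxx in Nk.
    * by rewrite (dA _ HyA) ?eqxx ?orbT // Fe' in E; case: E => Ev; rewrite Ev eqxx in Nk.
    * by rewrite F1 in E; case: E => Ev; rewrite Ev eqxx in Ng.
    * by rewrite F2 in E; case: E => Ev; rewrite Ev eqxx in Ng.
    * by rewrite F3 in E; case: E => Ev; rewrite Ev eqxx in Nk.
    * by case: (sot Ho) => _ [_ ->]; rewrite E.
  + move=> y Hy; apply/idP/idP.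
      move/eqP => E; have E' : en B (y, false) = Some v by [].
      case: (endB Hy E') => [[_ N1 N2 EA]|[Hw _]|[Hw _]|[Hw _]];
        try (by rewrite Hw eqxx in Nn Nk1 Nk2).
      have EA' : fup A y = Some v by [].
      by rewrite -M2 ?EA' ?eqxx //; apply: memd.
    move=> Hy'; have HyA := Sub2 _ Hy'; rewrite -M2 // in Hy'; move/eqP: Hy' => E.
    case: (classify Hy) => [Ey|Ey|Ey|[Ey|Ey|Ho]]; try subst y.
    * by rewrite (dA _ HyA) ?eqxx // Fe in E; case: E => Ev; rewrite Ev eqxx in Ng.
    * by rewrite (dA _ HyA) ?eqxx ?orbT // Fe in E; case: E => Ev; rewrite Ev eqxx in Ng.
    * by case: se1 => ->; rewrite E.
    * by case: se2 => ->; rewrite E.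
    * by case: se3 => ->; rewrite E.
    * by case: (sot Ho) => _ [-> _]; rewrite E.
- exists [:: e3], [:: d1; d2]; rewrite Ln /=; split => //.
    by rewrite inE d12.
  split.
  + by move=> y; rewrite inE => /eqP->.
  + by move=> y; rewrite !inE => /orP[] /eqP->.
  + move=> y Hy; apply/idP/idP.
      move/eqP => E; have E' : en B (y, true) = Some nu by [].
      case: (endB Hy E') => [[Kw _ _ _]|[_ M]|[Hw _]|[Hw _]].
      * by rewrite Kw in Kn.
      * by move: M; rewrite !inE !xpair_eqE /= ?andbT ?andbF ?orbF.
      * by rewrite Hw eqxx in D1.
      * by rewrite Hw eqxx in D2.
    by rewrite inE => /eqP->; case: se3 => _ ->.
  + move=> y Hy; apply/idP/idP.
      move/eqP => E; have E' : en B (y, false) = Some nu by [].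
      case: (endB Hy E') => [[Kw _ _ _]|[_ M]|[Hw _]|[Hw _]].
      * by rewrite Kw in Kn.
      * by move: M; rewrite !inE !xpair_eqE /= ?andbT ?andbF ?orbF.
      * by rewrite Hw eqxx in D1.
      * by rewrite Hw eqxx in D2.
    by rewrite !inE => /orP[] /eqP->; [case: sd1 => -> _|case: sd2 => -> _].
- exists [:: e1; d1], [::]; rewrite Lk1 /=; split => //.
    by rewrite inE; case: dnes1 => -> _.
  split.
  + by move=> y; rewrite !inE => /orP[] /eqP->.
  + by [].
  + move=> y Hy; apply/idP/idP.
      move/eqP => E; have E' : en B (y, true) = Some k1 by [].
      case: (endB Hy E') => [[Kw _ _ _]|[Hw _]|[_ M]|[Hw _]].
      * by rewrite Kw in Kk1.
      * by rewrite Hw eqxx in D1.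
      * by move: M; rewrite !inE !xpair_eqE /= ?andbT ?andbF ?orbF.
      * by rewrite Hw eqxx in D3.
    by rewrite !inE => /orP[] /eqP->; [case: se1 => _ ->|case: sd1 => _ ->].
  + move=> y Hy; apply/negbTE/eqP => E; have E' : en B (y, false) = Some k1 by [].
    case: (endB Hy E') => [[Kw _ _ _]|[Hw _]|[_ M]|[Hw _]].
    * by rewrite Kw in Kk1.
    * by rewrite Hw eqxx in D1.
    * by move: M; rewrite !inE !xpair_eqE /= ?andbT ?andbF ?orbF.
    * by rewrite Hw eqxx in D3.
- exists [:: e2; d2], [::]; rewrite Lk2 /=; split => //.
    by rewrite inE; case: dnes2 => _ ->.
  split.
  + by move=> y; rewrite !inE => /orP[] /eqP->.
  + by [].
  + move=> y Hy; apply/idP/idP.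
      move/eqP => E; have E' : en B (y, true) = Some k2 by [].
      case: (endB Hy E') => [[Kw _ _ _]|[Hw _]|[Hw _]|[_ M]].
      * by rewrite Kw in Kk2.
      * by rewrite Hw eqxx in D2.
      * by rewrite Hw eqxx in D3.
      * by move: M; rewrite !inE !xpair_eqE /= ?andbT ?andbF ?orbF.
    by rewrite !inE => /orP[] /eqP->; [case: se2 => _ ->|case: sd2 => _ ->].
  + move=> y Hy; apply/negbTE/eqP => E; have E' : en B (y, false) = Some k2 by [].
    case: (endB Hy E') => [[Kw _ _ _]|[Hw _]|[Hw _]|[_ M]].
    * by rewrite Kw in Kk2.
    * by rewrite Hw eqxx in D2.
    * by rewrite Hw eqxx in D3.
    * by move: M; rewrite !inE !xpair_eqE /= ?andbT ?andbF ?orbF.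
Qed.

End C1.

Definition dualk k := match k with Int => Cut | Cut => Int | Weak => Coweak
  | Coweak => Weak | Contr => Cocontr | Cocontr => Contr end.
Definition dual F := Flow (fV F) (fE F) (fun v => dualk (feta F v)) (flo F) (fup F).

Lemma st_dual F p : st (dual F) p = st F (flip p).
Proof. by case: p => x []. Qed.
Lemma en_dual F p : en (dual F) p = en F (flip p).
Proof. by case: p => x []. Qed.
Lemma isIC_dual k : isIC (dualk k) = isIC k.
Proof. by case: k. Qed.

Lemma tr_dual F p q : tr (dual F) p q = tr F (flip p) (flip q).
Proof.
apply/idP/idP => /trP [w [E1 E2 C]]; apply/trP; exists w.
  rewrite -st_dual -en_dual; split => //.
  case: C => [E|[Hv Hi Hn]]; [left|right].
    by rewrite /flip /= E.
  by split => //; rewrite -isIC_dual.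
rewrite st_dual en_dual; split => //.
case: C => [E|[Hv Hi Hn]]; [left|right].
  by move: E; rewrite /flip /=; case: (p.2); case: (q.2).
by split => //=; rewrite isIC_dual.
Qed.

Lemma ends_dual F : ends_in F -> ends_in (dual F).
Proof. by case=> H1 H2; split. Qed.
Lemma ends_undual F : ends_in (dual F) -> ends_in F.
Proof. by case=> H1 H2; split. Qed.

Lemma cf_dual F : ends_in F -> cycle_free F -> cycle_free (dual F).
Proof.
move=> HE; apply: (sim (f := id) (g := flip)) => //.
  by move=> p Hp; split => //; rewrite ?st_dual ?en_dual; case: (st F _); case: (en F _).
by move=> p q _ _; rewrite tr_dual.
Qed.

Lemma cf_undual F : ends_in F -> cycle_free (dual F) -> cycle_free F.
Proof.
move=> HE; apply: (sim (f := id) (g := flip)); first exact: ends_dual.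
  move=> p Hp; split => //; rewrite ?st_dual ?en_dual flipK.
    by case: (st F _).
  by case: (en F _).
by move=> p q _ _; rewrite tr_dual !flipK.
Qed.

Lemma arity_dual k : arity (dualk k) = ((arity k).2, (arity k).1).
Proof. by case: k. Qed.

Lemma Inv_dual F : Inv F -> Inv (dual F).
Proof.
case=> HE H; split; first exact: ends_dual.
move=> v Hv; have [Lu [Ld [U1 U2 S1 S2 [B1 B2 M1 M2]]]] := H v Hv.
exists Ld, Lu; rewrite /= arity_dual /=; split => //.
Qed.

Lemma Inv_undual F : Inv (dual F) -> Inv F.
Proof.
case=> HE H; split; first exact: ends_undual.
move=> v Hv; have [Lu [Ld [U1 U2 S1 S2 [B1 B2 M1 M2]]]] := H v Hv.
exists Ld, Lu; move: S1 S2; rewrite /= arity_dual /= => S1 S2; split => //.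
Qed.

Lemma frame_dual A B a b E N M : frame A B [:: a; b] E N M ->
  frame (dual A) (dual B) [:: b; a] E N M.
Proof.
have P : forall v, (v \in [:: b; a]) = (v \in [:: a; b]) by move=> v; rewrite !inE orbC.
case=> U1 U2 H3 H4 [U5 U6 H7 H8 H9]; split => //=.
- by apply: sub_all H3 => v; rewrite P.
- split => //= v; first by rewrite P H7.
  by rewrite P => Hv Hr; rewrite H9.
Qed.


Section C3.
Variables (A B : flow) (gam kap e1 e2 e e3 e4 k1 k2 g3 g4 d13 d14 d23 d24 : nat).
Hypothesis IA : Inv A.
Hypothesis CA : cycle_free A.
Hypothesis H0 : [/\ gam \in fV A, feta A gam = Contr, kap \in fV A, feta A kap = Cocontr &
        [/\ e1 \in fE A, e2 \in fE A, e \in fE A, e3 \in fE A & e4 \in fE A]].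
Hypothesis H1 : [/\ flo A e1 = Some gam, flo A e2 = Some gam, e1 != e2, fup A e = Some gam &
        [/\ flo A e = Some kap, fup A e3 = Some kap, fup A e4 = Some kap & e3 != e4]].
Hypothesis HF : frame A B [:: gam; kap] [:: e] [:: k1; k2; g3; g4] [:: d13; d14; d23; d24].
Hypothesis HL : [/\ feta B k1 = Cocontr, feta B k2 = Cocontr, feta B g3 = Contr &
        feta B g4 = Contr].
Hypothesis HS : forall x, x \in fE B ->
       fup B x = (if x == d13 then Some k1 else if x == d14 then Some k1
                  else if x == d23 then Some k2 else if x == d24 then Some k2
                  else if x == e3 then Some g3 else if x == e4 then Some g4
                  else fup A x) /\
       flo B x = (if x == d13 then Some g3 else if x == d14 then Some g4
                  else if x == d23 then Some g3 else if x == d24 then Some g4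
                  else if x == e1 then Some k1 else if x == e2 then Some k2
                  else flo A x).

Lemma gk3 : gam != kap.
Proof. by case: H0 => _ Hg _ Hk _; apply/eqP => E; rewrite E Hk in Hg. Qed.

Lemma inA3 : [/\ e1 \in fE A, e2 \in fE A, e \in fE A, e3 \in fE A & e4 \in fE A].
Proof. by case: H0 => _ _ _ _ []. Qed.

Lemma Vinfo v : v \in fV A -> exists Lu Ld : seq nat,
  [/\ uniq Lu, uniq Ld, size Lu = (arity (feta A v)).1, size Ld = (arity (feta A v)).2 &
   [/\ {subset Lu <= fE A}, {subset Ld <= fE A},
       (forall x, x \in fE A -> (flo A x == Some v) = (x \in Lu)) &
       (forall x, x \in fE A -> (fup A x == Some v) = (x \in Ld))]].
Proof. by case: IA => _; apply. Qed.

Lemma Ag1' x : x \in fE A -> flo A x = Some gam -> x = e1 \/ x = e2.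
Proof.
case: H0 => Hgv Hg _ _ _; have [Lu [Ld [_ _ S1 _ [_ _ M1 _]]]] := Vinfo Hgv.
case: inA3 => I1 I2 _ _ _; case: H1 => F1 F2 N _ _ Hx Ex.
rewrite Hg /= in S1.
by apply: (L2 S1) => //; rewrite -M1 // ?F1 ?F2 ?Ex.
Qed.

Lemma Ag2' x : x \in fE A -> fup A x = Some gam -> x = e.
Proof.
case: H0 => Hgv Hg _ _ _; have [Lu [Ld [_ _ _ S2 [_ _ _ M2]]]] := Vinfo Hgv.
case: inA3 => _ _ I _ _; case: H1 => _ _ _ F _ Hx Ex.
rewrite Hg /= in S2.
by apply: (L1 S2) => //; rewrite -M2 // ?F ?Ex.
Qed.

Lemma Ak1' x : x \in fE A -> flo A x = Some kap -> x = e.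
Proof.
case: H0 => _ _ Hkv Hk _; have [Lu [Ld [_ _ S1 _ [_ _ M1 _]]]] := Vinfo Hkv.
case: inA3 => _ _ I _ _; case: H1 => _ _ _ _ [F _ _ _] Hx Ex.
rewrite Hk /= in S1.
by apply: (L1 S1) => //; rewrite -M1 // ?F ?Ex.
Qed.

Lemma Ak2' x : x \in fE A -> fup A x = Some kap -> x = e3 \/ x = e4.
Proof.
case: H0 => _ _ Hkv Hk _; have [Lu [Ld [_ _ _ S2 [_ _ _ M2]]]] := Vinfo Hkv.
case: inA3 => _ _ _ I3 I4; case: H1 => _ _ _ _ [_ F3 F4 N] Hx Ex.
rewrite Hk /= in S2.
by apply: (L2 S2) => //; rewrite -M2 // ?F3 ?F4 ?Ex.
Qed.

Lemma no_back x : x \in fE A -> flo A x = Some gam -> fup A x = Some kap -> False.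
Proof.
move=> Hx F U; apply: CA; exists gam, [:: e; x]; split; first by case: H0.
case: inA3 => _ _ Ie _ _; case: H1 => _ _ _ Fe [Fe' _ _ _].
split.
  apply: ai_base; left; split => //=.
    by rewrite Ie Hx.
  by rewrite Fe' U eqxx.
rewrite /= inE andbT; apply/eqP => E.
by move: U; rewrite -E Fe => -[E']; move: gk3; rewrite E' eqxx.
Qed.

Lemma dist3 : [/\ e1 != e3, e1 != e4, e2 != e3 & e2 != e4].
Proof.
case: inA3 => I1 I2 _ I3 I4; case: H1 => F1 F2 _ _ [_ F3 F4 _].
split; apply/eqP => E.
- by apply: (no_back I1 F1); rewrite E.
- by apply: (no_back I1 F1); rewrite E.
- by apply: (no_back I2 F2); rewrite E.
- by apply: (no_back I2 F2); rewrite E.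
Qed.

Lemma diste : [/\ e1 != e, e2 != e, e3 != e & e4 != e].
Proof.
case: H1 => F1 F2 _ Fe [Fe' F3 F4 _].
split; apply/eqP => E.
- by move: F1; rewrite E Fe' => -[E']; move: gk3; rewrite E' eqxx.
- by move: F2; rewrite E Fe' => -[E']; move: gk3; rewrite E' eqxx.
- by move: F3; rewrite E Fe => -[E']; move: gk3; rewrite E' eqxx.
- by move: F4; rewrite E Fe => -[E']; move: gk3; rewrite E' eqxx.
Qed.

Lemma ne12 : e1 != e2. Proof. by case: H1. Qed.
Lemma ne34 : e3 != e4. Proof. by case: H1 => _ _ _ _ []. Qed.

Definition K3 v := [&& v \in fV A, v != gam & v != kap].

Lemma Knot3 : [/\ ~~ K3 k1, ~~ K3 k2, ~~ K3 g3 & ~~ K3 g4].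
Proof.
case: HF => _ _ HnV _ _.
move: HnV; rewrite /= !andbT /K3 !inE => /and4P[N1 N2 N3 N4].
split.
- by move: N1; case: (k1 \in fV A); case: (k1 == gam); case: (k1 == kap).
- by move: N2; case: (k2 \in fV A); case: (k2 == gam); case: (k2 == kap).
- by move: N3; case: (g3 \in fV A); case: (g3 == gam); case: (g3 == kap).
- by move: N4; case: (g4 \in fV A); case: (g4 == gam); case: (g4 == kap).
Qed.

Lemma Knew3 v : K3 v -> [/\ v != k1, v != k2, v != g3 & v != g4].
Proof.
case: Knot3 => N1 N2 N3 N4 Kv.
by split; apply/eqP => E; subst v; [move: N1|move: N2|move: N3|move: N4]; rewrite Kv.
Qed.

Lemma new_dist3 : [/\ k1 != k2, k1 != g3, k1 != g4 & [/\ k2 != g3, k2 != g4 & g3 != g4]].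
Proof.
case: HF => /= U _ _ _ _.
by split; [..|split]; apply/eqP => E; move: U; rewrite E !inE eqxx /= ?orbT ?andbF.
Qed.

Lemma dd3 : [/\ d13 != d14, d13 != d23, d13 != d24 & [/\ d14 != d23, d14 != d24 & d23 != d24]].
Proof.
case: HF => _ /= U _ _ _.
by split; [..|split]; apply/eqP => E; move: U; rewrite E !inE eqxx /= ?orbT ?andbF.
Qed.

Definition isd x := [|| x == d13, x == d14, x == d23 | x == d24].

Lemma dA3 x : isd x -> x \in fE A -> x = e.
Proof.
case: HF => _ _ _ HnE _ Hx Hx'.
move: HnE; rewrite /= !andbT => /and4P[N1 N2 N3 N4].
by case/or4P: Hx => /eqP E; subst x; [move: N1|move: N2|move: N3|move: N4];
  rewrite Hx' /= inE => /eqP.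
Qed.

Lemma memB3 x : (x \in fE B) = ((x \in fE A) && (x != e)) || isd x.
Proof. by case: HF => _ _ _ _ [_ _ _ -> _]; rewrite !inE /isd. Qed.

Lemma memVB3 v : (v \in fV B) = K3 v || [|| v == k1, v == k2, v == g3 | v == g4].
Proof. by case: HF => _ _ _ _ [_ _ -> _ _]; rewrite !inE /K3 negb_or andbA. Qed.

Lemma etaB3 v : K3 v -> feta B v = feta A v.
Proof.
case: HF => _ _ _ _ [_ _ _ _ H] /and3P[Hv Hg Hk].
by apply: H => //; rewrite !inE negb_or Hg Hk.
Qed.

Lemma dne3 x : x \in fE A -> x != e -> ~~ isd x.
Proof.
move=> Hx Ne; apply/negP => H.
by move: Ne; rewrite (dA3 H Hx) eqxx.
Qed.

Lemma notd x : ~~ isd x -> [/\ (x == d13) = false, (x == d14) = false, (x == d23) = false & (x == d24) = false].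
Proof. by rewrite /isd !negb_or => /and4P[/negbTE-> /negbTE-> /negbTE-> /negbTE->]. Qed.

Lemma nde : [/\ ~~ isd e1, ~~ isd e2, ~~ isd e3 & ~~ isd e4].
Proof.
case: inA3 => I1 I2 _ I3 I4; case: diste => N1 N2 N3 N4.
by split; apply: dne3.
Qed.

Lemma inB3 : [/\ e1 \in fE B, e2 \in fE B, e3 \in fE B & e4 \in fE B].
Proof.
case: inA3 => I1 I2 _ I3 I4; case: diste => N1 N2 N3 N4.
by split; rewrite memB3 ?I1 ?I2 ?I3 ?I4 ?N1 ?N2 ?N3 ?N4.
Qed.

Lemma inBd : [/\ d13 \in fE B, d14 \in fE B, d23 \in fE B & d24 \in fE B].
Proof. by split; rewrite memB3 /isd !eqxx ?orbT. Qed.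

Lemma eqfalse : [/\ (e1 == e3) = false, (e1 == e4) = false, (e2 == e3) = false,
   (e2 == e4) = false & [/\ (e3 == e1) = false, (e3 == e2) = false, (e4 == e1) = false,
   (e4 == e2) = false & [/\ (e2 == e1) = false, (e4 == e3) = false, (e1 == e2) = false & (e3 == e4) = false]]].
Proof.
case: dist3 => A1 A2 A3 A4; have B1 := ne12; have B2 := ne34.
rewrite [e3 == e1]eq_sym [e3 == e2]eq_sym [e4 == e1]eq_sym [e4 == e2]eq_sym [e2 == e1]eq_sym [e4 == e3]eq_sym.
by rewrite (negbTE A1) (negbTE A2) (negbTE A3) (negbTE A4) (negbTE B1) (negbTE B2).
Qed.

Lemma sd3 : [/\ fup B d13 = Some k1 /\ flo B d13 = Some g3,
               fup B d14 = Some k1 /\ flo B d14 = Some g4,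
               fup B d23 = Some k2 /\ flo B d23 = Some g3 &
               fup B d24 = Some k2 /\ flo B d24 = Some g4].
Proof.
case: inBd => I1 I2 I3 I4; case: dd3 => D1 D2 D3 [D4 D5 D6].
split.
- by have := HS I1; rewrite eqxx.
- by have := HS I2; rewrite [d14 == d13]eq_sym (negbTE D1) eqxx.
- by have := HS I3; rewrite [d23 == d13]eq_sym (negbTE D2) [d23 == d14]eq_sym (negbTE D4) eqxx.
- by have := HS I4; rewrite [d24 == d13]eq_sym (negbTE D3) [d24 == d14]eq_sym (negbTE D5)
     [d24 == d23]eq_sym (negbTE D6) eqxx.
Qed.

Lemma se3c : [/\ fup B e1 = fup A e1 /\ flo B e1 = Some k1,
               fup B e2 = fup A e2 /\ flo B e2 = Some k2,
               fup B e3 = Some g3 /\ flo B e3 = flo A e3 &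
               fup B e4 = Some g4 /\ flo B e4 = flo A e4].
Proof.
case: inB3 => I1 I2 I3 I4; case: nde => N1 N2 N3 N4.
case: eqfalse => Q13 Q14 Q23 Q24 [Q31 Q32 Q41 Q42 [Q21 Q43 Q12 Q34]].
split.
- by have := HS I1; case: (notd N1) => -> -> -> ->; rewrite Q13 Q14 eqxx.
- by have := HS I2; case: (notd N2) => -> -> -> ->; rewrite Q23 Q24 Q21 eqxx.
- by have := HS I3; case: (notd N3) => -> -> -> ->; rewrite Q31 Q32 eqxx.
- by have := HS I4; case: (notd N4) => -> -> -> ->; rewrite Q43 Q41 Q42 eqxx.
Qed.

Definition oth3 x := [&& x \in fE A, x \notin [:: e; e1; e2; e3; e4] & ~~ isd x].

Lemma oth3_ne x : oth3 x -> [/\ x \in fE A, x != e, x != e1, x != e2 & [/\ x != e3, x != e4 & ~~ isd x]].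
Proof.
case/and3P=> Hx; rewrite !inE !negb_or => H Hd.
by case/andP: H => ? /andP[? /andP[? /andP[? ?]]].
Qed.

Lemma sot3 x : oth3 x -> x \in fE B /\ fup B x = fup A x /\ flo B x = flo A x.
Proof.
case/oth3_ne=> Hx Ne N1 N2 [N3 N4 Nd].
have HxB : x \in fE B by rewrite memB3 Hx Ne.
have := HS HxB; case: (notd Nd) => -> -> -> ->.
by rewrite (negbTE N1) (negbTE N2) (negbTE N3) (negbTE N4).
Qed.

Lemma classify3 x : x \in fE B -> [\/ isd x, x = e1, x = e2 | [\/ x = e3, x = e4 | oth3 x]].
Proof.
rewrite memB3 => H.
case Hd: (isd x); first by constructor 1.
have [->|N1] := eqVneq x e1; first by constructor 2.
have [->|N2] := eqVneq x e2; first by constructor 3.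
have [->|N3] := eqVneq x e3; first by constructor 4; constructor 1.
have [->|N4] := eqVneq x e4; first by constructor 4; constructor 2.
constructor 4; constructor 3.
case/orP: H => [/andP[Hx Ne]|Hd']; last by rewrite Hd' in Hd.
apply/and3P; split => //; last by rewrite Hd.
by rewrite !inE !negb_or Ne N1 N2 N3 N4.
Qed.

Definition okopt3 (o : option nat) := if o is Some v then K3 v else true.

Lemma okv v : v \in fV A -> v != gam -> v != kap -> K3 v.
Proof. by move=> ? ? ?; apply/and3P. Qed.

Lemma ok3_e : [/\ okopt3 (fup A e1), okopt3 (fup A e2), okopt3 (flo A e3) & okopt3 (flo A e4)].
Proof.
case: inA3 => I1 I2 _ I3 I4; case: diste => N1 N2 N3 N4; case: dist3 => M1 M2 M3 M4.
case: IA => [[HE1 HE2] _].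
have Nd : forall a b : nat, a != b -> a = b -> False by move=> a b /eqP.
split.
- case E: (fup A e1) => [v|] //=; apply: okv; first exact: HE1 E.
    by apply/eqP => Ev; rewrite Ev in E; exact: Nd _ _ N1 (Ag2' I1 E).
  by apply/eqP => Ev; rewrite Ev in E; case: (Ak2' I1 E); [exact: Nd _ _ M1|exact: Nd _ _ M2].
- case E: (fup A e2) => [v|] //=; apply: okv; first exact: HE1 E.
    by apply/eqP => Ev; rewrite Ev in E; exact: Nd _ _ N2 (Ag2' I2 E).
  by apply/eqP => Ev; rewrite Ev in E; case: (Ak2' I2 E); [exact: Nd _ _ M3|exact: Nd _ _ M4].
- case E: (flo A e3) => [v|] //=; apply: okv; first exact: HE2 E.
    apply/eqP => Ev; rewrite Ev in E; case: (Ag1' I3 E) => Ex.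
      exact: (Nd _ _ M1 (esym Ex)).
    exact: (Nd _ _ M3 (esym Ex)).
  by apply/eqP => Ev; rewrite Ev in E; exact: Nd _ _ N3 (Ak1' I3 E).
- case E: (flo A e4) => [v|] //=; apply: okv; first exact: HE2 E.
    apply/eqP => Ev; rewrite Ev in E; case: (Ag1' I4 E) => Ex.
      exact: (Nd _ _ M2 (esym Ex)).
    exact: (Nd _ _ M4 (esym Ex)).
  by apply/eqP => Ev; rewrite Ev in E; exact: Nd _ _ N4 (Ak1' I4 E).
Qed.

Lemma ok3_oth x : oth3 x -> okopt3 (fup A x) /\ okopt3 (flo A x).
Proof.
case/oth3_ne=> Hx Ne N1 N2 [N3 N4 _].
case: IA => [[HE1 HE2] _].
have Nd : forall a b : nat, a != b -> a = b -> False by move=> a b /eqP.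
split.
  case E: (fup A x) => [v|] //=; apply: okv; first exact: HE1 E.
    by apply/eqP => Ev; rewrite Ev in E; exact: Nd _ _ Ne (Ag2' Hx E).
  by apply/eqP => Ev; rewrite Ev in E; case: (Ak2' Hx E); [exact: Nd _ _ N3|exact: Nd _ _ N4].
case E: (flo A x) => [v|] //=; apply: okv; first exact: HE2 E.
  by apply/eqP => Ev; rewrite Ev in E; case: (Ag1' Hx E); [exact: Nd _ _ N1|exact: Nd _ _ N2].
by apply/eqP => Ev; rewrite Ev in E; exact: Nd _ _ Ne (Ak1' Hx E).
Qed.

Definition f3 v := if (v == k1) || (v == k2) then gam else if (v == g3) || (v == g4) then kap else v.
Definition g3f (p : nat * bool) := if isd p.1 then (e, p.2) else p.

Lemma f3K v : K3 v -> f3 v = v.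
Proof. by case/Knew3 => N1 N2 N3 N4; rewrite /f3 (negbTE N1) (negbTE N2) (negbTE N3) (negbTE N4). Qed.
Lemma omap3K o : okopt3 o -> omap f3 o = o.
Proof. by case: o => //= v /f3K ->. Qed.
Lemma f3new : [/\ f3 k1 = gam, f3 k2 = gam, f3 g3 = kap & f3 g4 = kap].
Proof.
case: new_dist3 => D1 D2 D3 [D4 D5 D6].
split; rewrite /f3.
- by rewrite eqxx.
- by rewrite eqxx orbT.
- by rewrite [g3 == k1]eq_sym (negbTE D2) [g3 == k2]eq_sym (negbTE D4) eqxx.
- by rewrite [g4 == k1]eq_sym (negbTE D3) [g4 == k2]eq_sym (negbTE D5) eqxx orbT.
Qed.

Lemma g3d x b : isd x -> g3f (x, b) = (e, b).
Proof. by rewrite /g3f /= => ->. Qed.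
Lemma g3id x b : ~~ isd x -> g3f (x, b) = (x, b).
Proof. by rewrite /g3f /= => /negbTE ->. Qed.

Lemma S13 p : p.1 \in fE B ->
  [/\ (g3f p).1 \in fE A, st A (g3f p) = omap f3 (st B p) & en A (g3f p) = omap f3 (en B p)].
Proof.
case: p => x b /= Hx.
case: inA3 => I1 I2 Ie I3 I4.
case: f3new => Fk1 Fk2 Fg3 Fg4.
case: H1 => F1 F2 _ Fe [Fe' F3 F4 _].
case: sd3 => [[U13 L13] [U14 L14] [U23 L23] [U24 L24]].
case: se3c => [[U1 L1] [U2 L2] [U3 L3] [U4 L4]].
case: ok3_e => O1 O2 O3 O4.
case: (classify3 Hx) => [Hd|->|->|[->|->|Ho]].
- rewrite g3d //; case/or4P: Hd => /eqP ->; case: b; split;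
  rewrite /st /en /= ?U13 ?L13 ?U14 ?L14 ?U23 ?L23 ?U24 ?L24 /= ?Fk1 ?Fk2 ?Fg3 ?Fg4 ?Fe ?Fe' //.
- case: nde => N _ _ _; rewrite g3id //.
  by case: b; split; rewrite /st /en /= ?U1 ?L1 ?(omap3K O1) //= ?Fk1 ?F1.
- case: nde => _ N _ _; rewrite g3id //.
  by case: b; split; rewrite /st /en /= ?U2 ?L2 ?(omap3K O2) //= ?Fk2 ?F2.
- case: nde => _ _ N _; rewrite g3id //.
  by case: b; split; rewrite /st /en /= ?U3 ?L3 ?(omap3K O3) //= ?Fg3 ?F3.
- case: nde => _ _ _ N; rewrite g3id //.
  by case: b; split; rewrite /st /en /= ?U4 ?L4 ?(omap3K O4) //= ?Fg4 ?F4.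
- have [HA _ _ _ [_ _ Nd]] := oth3_ne Ho.
  rewrite g3id //; case: (sot3 Ho) => _ [U L]; case: (ok3_oth Ho) => P1 P2.
  by case: b; split; rewrite /st /en /= ?U ?L ?(omap3K P1) ?(omap3K P2).
Qed.

Lemma endB3 x b w : x \in fE B -> en B (x, b) = Some w ->
 [\/ [/\ K3 w, ~~ isd x & en A (x, b) = Some w],
     w = k1 /\ (x, b) \in [:: (e1, true); (d13, false); (d14, false)] |
     [\/ w = k2 /\ (x, b) \in [:: (e2, true); (d23, false); (d24, false)],
         w = g3 /\ (x, b) \in [:: (d13, true); (d23, true); (e3, false)] |
         w = g4 /\ (x, b) \in [:: (d14, true); (d24, true); (e4, false)]]].
Proof.
move=> Hx.
case: sd3 => [[U13 L13] [U14 L14] [U23 L23] [U24 L24]].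
case: se3c => [[U1 L1] [U2 L2] [U3 L3] [U4 L4]].
case: ok3_e => O1 O2 O3 O4.
case: nde => N1 N2 N3 N4.
case: (classify3 Hx) => [Hd|->|->|[->|->|Ho]].
- case/or4P: Hd => /eqP ->; case: b; rewrite /en /= ?U13 ?L13 ?U14 ?L14 ?U23 ?L23 ?U24 ?L24 => -[<-].
  + by constructor 3; constructor 2; rewrite !inE eqxx.
  + by constructor 2; rewrite !inE eqxx !orbT.
  + by constructor 3; constructor 3; rewrite !inE eqxx.
  + by constructor 2; rewrite !inE eqxx !orbT.
  + by constructor 3; constructor 2; rewrite !inE eqxx !orbT.
  + by constructor 3; constructor 1; rewrite !inE eqxx !orbT.
  + by constructor 3; constructor 3; rewrite !inE eqxx !orbT.
  + by constructor 3; constructor 1; rewrite !inE eqxx !orbT.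
- case: b; rewrite /en /= ?U1 ?L1.
    by move=> [<-]; constructor 2; rewrite !inE eqxx.
  by move=> E; constructor 1; split => //; move: O1; rewrite E.
- case: b; rewrite /en /= ?U2 ?L2.
    by move=> [<-]; constructor 3; constructor 1; rewrite !inE eqxx.
  by move=> E; constructor 1; split => //; move: O2; rewrite E.
- case: b; rewrite /en /= ?U3 ?L3.
    by move=> E; constructor 1; split => //; move: O3; rewrite E.
  by move=> [<-]; constructor 3; constructor 2; rewrite !inE eqxx !orbT.
- case: b; rewrite /en /= ?U4 ?L4.
    by move=> E; constructor 1; split => //; move: O4; rewrite E.
  by move=> [<-]; constructor 3; constructor 3; rewrite !inE eqxx !orbT.
- have [_ _ _ _ [_ _ Nd]] := oth3_ne Ho.
  case: (sot3 Ho) => _ [U L]; case: (ok3_oth Ho) => P1 P2.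
  case: b; rewrite /en /= ?U ?L => E; constructor 1; split => //.
    by move: P2; rewrite E.
  by move: P1; rewrite E.
Qed.

Lemma endB3K x b w : x \in fE B -> en B (x, b) = Some w -> K3 w ->
  ~~ isd x /\ en A (x, b) = Some w.
Proof.
move=> Hx E Kw; case: Knot3 => Q1 Q2 Q3 Q4.
case: (endB3 Hx E) => [[_ ? ?]|[Hw _]|[[Hw _]|[Hw _]|[Hw _]]] //; by move: Kw Q1 Q2 Q3 Q4; rewrite Hw => ->.
Qed.

Lemma S23 p q : p.1 \in fE B -> q.1 \in fE B -> tr B p q -> tr A (g3f p) (g3f q).
Proof.
case: p q => x b [y c] /= Hp Hq /trP [w [E1 E2 C]].
have [_ _ Ep] := S13 (p := (x, b)) Hp; have [_ Sq _] := S13 (p := (y, c)) Hq.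
apply/trP; exists (f3 w); split; [by rewrite Ep E1 | by rewrite Sq E2 |].
have Gp : (g3f (x, b)).2 = b by rewrite /g3f; case: (isd _).
have Gq : (g3f (y, c)).2 = c by rewrite /g3f; case: (isd _).
case: C => [Ebc|[Hv Hic Hne]]; first by left; rewrite Gp Gq.
case: HL => L1 L2 L3 L4.
move: Hv; rewrite memVB3 => /orP[Kw|/or4P[] /eqP Ew]; last first.
- by rewrite Ew L4 in Hic.
- by rewrite Ew L3 in Hic.
- by rewrite Ew L2 in Hic.
- by rewrite Ew L1 in Hic.
have [Np EA] := endB3K Hp E1 Kw.
have E2' : en B (y, ~~ c) = Some w by rewrite -E2; case: (c).
have [Nq EA'] := endB3K Hq E2' Kw.
right; rewrite !g3id // f3K //; split => //.
  by case/and3P: Kw.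
by rewrite -etaB3.
Qed.

Lemma c3_cf : cycle_free B.
Proof.
apply: (sim (f := f3) (g := g3f)) CA; [by case: IA | exact: S13 | exact: S23].
Qed.

Lemma c3_ends : ends_in B.
Proof.
split=> x v Hx E.
- have E' : en B (x, false) = Some v by [].
  rewrite memVB3; case: (endB3 Hx E') => [[-> _ _]|[-> _]|[[-> _]|[-> _]|[-> _]]] //;
  by rewrite eqxx ?orbT.
- have E' : en B (x, true) = Some v by [].
  rewrite memVB3; case: (endB3 Hx E') => [[-> _ _]|[-> _]|[[-> _]|[-> _]|[-> _]]] //;
  by rewrite eqxx ?orbT.
Qed.

Lemma memd3 y : y \in fE B -> ~~ isd y -> y \in fE A.
Proof. by rewrite memB3 => /orP[/andP[]//|->]. Qed.

Ltac newcontra Hw D1 D2 D3 D4 D5 D6 :=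
  by move: D1 D2 D3 D4 D5 D6; rewrite Hw eqxx.

Lemma c3_Inv : Inv B.
Proof.
split; first exact: c3_ends.
case: f3new => Fk1 Fk2 Fg3 Fg4; case: HL => L1 L2 L3 L4; case: Knot3 => Q1 Q2 Q3 Q4.
case: new_dist3 => D1 D2 D3 [D4 D5 D6].
case: H1 => F1 F2 _ Fe [Fe' F3 F4 _].
case: sd3 => [[U13 R13] [U14 R14] [U23 R23] [U24 R24]].
case: se3c => [[U1 R1] [U2 R2] [U3 R3] [U4 R4]].
case: inB3 => B1 B2 B3 B4; case: inBd => Bd13 Bd14 Bd23 Bd24.
case: dd3 => P1 P2 P3 [P4 P5 P6].
move=> v; rewrite memVB3 => /orP[Kv|/or4P[] /eqP->].
- have /and3P[Hv Ng Nk] := Kv.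
  have [Lu [Ld [U1' U2' S1' S2' [Sub1 Sub2 M1 M2]]]] := Vinfo Hv.
  exists Lu, Ld; rewrite etaB3 //; split => //; split.
  + move=> y Hy; have Hy' := Sub1 _ Hy; have := M1 _ Hy'; rewrite Hy => /eqP E.
    rewrite memB3 Hy' /=; apply/orP; left; apply/eqP => Ey.
    by move: E; rewrite Ey Fe' => -[Ev]; rewrite Ev eqxx in Nk.
  + move=> y Hy; have Hy' := Sub2 _ Hy; have := M2 _ Hy'; rewrite Hy => /eqP E.
    rewrite memB3 Hy' /=; apply/orP; left; apply/eqP => Ey.
    by move: E; rewrite Ey Fe => -[Ev]; rewrite Ev eqxx in Ng.
  + move=> y Hy; apply/idP/idP.
      move/eqP => E; have E' : en B (y, true) = Some v by [].
      have [Nd EA] := endB3K Hy E' Kv.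
      have EA' : flo A y = Some v by [].
      by rewrite -M1 ?EA' ?eqxx //; apply: memd3.
    move=> Hy'; have HyA := Sub1 _ Hy'; rewrite -M1 // in Hy'; move/eqP: Hy' => E.
    case: (classify3 Hy) => [Hd|Ey|Ey|[Ey|Ey|Ho]].
    * by rewrite (dA3 Hd HyA) Fe' in E; case: E => Ev; rewrite Ev eqxx in Nk.
    * by rewrite Ey F1 in E; case: E => Ev; rewrite Ev eqxx in Ng.
    * by rewrite Ey F2 in E; case: E => Ev; rewrite Ev eqxx in Ng.
    * by rewrite Ey R3 -Ey E.
    * by rewrite Ey R4 -Ey E.
    * by case: (sot3 Ho) => _ [_ ->]; rewrite E.
  + move=> y Hy; apply/idP/idP.
      move/eqP => E; have E' : en B (y, false) = Some v by [].
      have [Nd EA] := endB3K Hy E' Kv.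
      have EA' : fup A y = Some v by [].
      by rewrite -M2 ?EA' ?eqxx //; apply: memd3.
    move=> Hy'; have HyA := Sub2 _ Hy'; rewrite -M2 // in Hy'; move/eqP: Hy' => E.
    case: (classify3 Hy) => [Hd|Ey|Ey|[Ey|Ey|Ho]].
    * by rewrite (dA3 Hd HyA) Fe in E; case: E => Ev; rewrite Ev eqxx in Ng.
    * by rewrite Ey U1 -Ey E.
    * by rewrite Ey U2 -Ey E.
    * by rewrite Ey F3 in E; case: E => Ev; rewrite Ev eqxx in Nk.
    * by rewrite Ey F4 in E; case: E => Ev; rewrite Ev eqxx in Nk.
    * by case: (sot3 Ho) => _ [-> _]; rewrite E.
- exists [:: e1], [:: d13; d14]; rewrite L1 /=; split => //.
    by rewrite inE P1.
  split.
  + by move=> y; rewrite inE => /eqP->.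
  + by move=> y; rewrite !inE => /orP[] /eqP->.
  + move=> y Hy; apply/idP/idP.
      move/eqP => E; have E' : en B (y, true) = Some k1 by [].
      case: (endB3 Hy E') => [[Kw _ _]|[_ M]|[[Hw M]|[Hw M]|[Hw M]]].
      * by rewrite Kw in Q1.
      * by move: M; rewrite !inE !xpair_eqE /= ?andbT ?andbF ?orbF.
      * newcontra Hw D1 D2 D3 D4 D5 D6.
      * newcontra Hw D1 D2 D3 D4 D5 D6.
      * newcontra Hw D1 D2 D3 D4 D5 D6.
    by rewrite inE => /eqP->; rewrite R1.
  + move=> y Hy; apply/idP/idP.
      move/eqP => E; have E' : en B (y, false) = Some k1 by [].
      case: (endB3 Hy E') => [[Kw _ _]|[_ M]|[[Hw M]|[Hw M]|[Hw M]]].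
      * by rewrite Kw in Q1.
      * by move: M; rewrite !inE !xpair_eqE /= ?andbT ?andbF ?orbF.
      * newcontra Hw D1 D2 D3 D4 D5 D6.
      * newcontra Hw D1 D2 D3 D4 D5 D6.
      * newcontra Hw D1 D2 D3 D4 D5 D6.
    by rewrite !inE => /orP[] /eqP->; rewrite ?U13 ?U14.
- exists [:: e2], [:: d23; d24]; rewrite L2 /=; split => //.
    by rewrite inE P6.
  split.
  + by move=> y; rewrite inE => /eqP->.
  + by move=> y; rewrite !inE => /orP[] /eqP->.
  + move=> y Hy; apply/idP/idP.
      move/eqP => E; have E' : en B (y, true) = Some k2 by [].
      case: (endB3 Hy E') => [[Kw _ _]|[Hw M]|[[_ M]|[Hw M]|[Hw M]]].
      * by rewrite Kw in Q2.
      * newcontra Hw D1 D2 D3 D4 D5 D6.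
      * by move: M; rewrite !inE !xpair_eqE /= ?andbT ?andbF ?orbF.
      * newcontra Hw D1 D2 D3 D4 D5 D6.
      * newcontra Hw D1 D2 D3 D4 D5 D6.
    by rewrite inE => /eqP->; rewrite R2.
  + move=> y Hy; apply/idP/idP.
      move/eqP => E; have E' : en B (y, false) = Some k2 by [].
      case: (endB3 Hy E') => [[Kw _ _]|[Hw M]|[[_ M]|[Hw M]|[Hw M]]].
      * by rewrite Kw in Q2.
      * newcontra Hw D1 D2 D3 D4 D5 D6.
      * by move: M; rewrite !inE !xpair_eqE /= ?andbT ?andbF ?orbF.
      * newcontra Hw D1 D2 D3 D4 D5 D6.
      * newcontra Hw D1 D2 D3 D4 D5 D6.
    by rewrite !inE => /orP[] /eqP->; rewrite ?U23 ?U24.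
- exists [:: d13; d23], [:: e3]; rewrite L3 /=; split => //.
    by rewrite inE P2.
  split.
  + by move=> y; rewrite !inE => /orP[] /eqP->.
  + by move=> y; rewrite inE => /eqP->.
  + move=> y Hy; apply/idP/idP.
      move/eqP => E; have E' : en B (y, true) = Some g3 by [].
      case: (endB3 Hy E') => [[Kw _ _]|[Hw M]|[[Hw M]|[_ M]|[Hw M]]].
      * by rewrite Kw in Q3.
      * newcontra Hw D1 D2 D3 D4 D5 D6.
      * newcontra Hw D1 D2 D3 D4 D5 D6.
      * by move: M; rewrite !inE !xpair_eqE /= ?andbT ?andbF ?orbF.
      * newcontra Hw D1 D2 D3 D4 D5 D6.
    by rewrite !inE => /orP[] /eqP->; rewrite ?R13 ?R23.
  + move=> y Hy; apply/idP/idP.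
      move/eqP => E; have E' : en B (y, false) = Some g3 by [].
      case: (endB3 Hy E') => [[Kw _ _]|[Hw M]|[[Hw M]|[_ M]|[Hw M]]].
      * by rewrite Kw in Q3.
      * newcontra Hw D1 D2 D3 D4 D5 D6.
      * newcontra Hw D1 D2 D3 D4 D5 D6.
      * by move: M; rewrite !inE !xpair_eqE /= ?andbT ?andbF ?orbF.
      * newcontra Hw D1 D2 D3 D4 D5 D6.
    by rewrite inE => /eqP->; rewrite U3.
- exists [:: d14; d24], [:: e4]; rewrite L4 /=; split => //.
    by rewrite inE P5.
  split.
  + by move=> y; rewrite !inE => /orP[] /eqP->.
  + by move=> y; rewrite inE => /eqP->.
  + move=> y Hy; apply/idP/idP.
      move/eqP => E; have E' : en B (y, true) = Some g4 by [].
      case: (endB3 Hy E') => [[Kw _ _]|[Hw M]|[[Hw M]|[Hw M]|[_ M]]].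
      * by rewrite Kw in Q4.
      * newcontra Hw D1 D2 D3 D4 D5 D6.
      * newcontra Hw D1 D2 D3 D4 D5 D6.
      * newcontra Hw D1 D2 D3 D4 D5 D6.
      * by move: M; rewrite !inE !xpair_eqE /= ?andbT ?andbF ?orbF.
    by rewrite !inE => /orP[] /eqP->; rewrite ?R14 ?R24.
  + move=> y Hy; apply/idP/idP.
      move/eqP => E; have E' : en B (y, false) = Some g4 by [].
      case: (endB3 Hy E') => [[Kw _ _]|[Hw M]|[[Hw M]|[Hw M]|[_ M]]].
      * by rewrite Kw in Q4.
      * newcontra Hw D1 D2 D3 D4 D5 D6.
      * newcontra Hw D1 D2 D3 D4 D5 D6.
      * newcontra Hw D1 D2 D3 D4 D5 D6.
      * by move: M; rewrite !inE !xpair_eqE /= ?andbT ?andbF ?orbF.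
    by rewrite inE => /eqP->; rewrite U4.
Qed.

End C3.

Lemma step_ok A B : step_c A B -> Inv A -> cycle_free A -> Inv B /\ cycle_free B.
Proof.
move=> S IA CA; case: S => [|[]].
- case=> gam [kap [e1 [e2 [e [e3 [nu [k1 [k2 [d1 [d2 [H0 [H1 [HF [HL HS]]]]]]]]]]]]]].
  split; [exact: (c1_Inv IA H0 H1 HF HL HS)|exact: (c1_cf IA H0 H1 HF HL HS CA)].
- case=> iota [kap [e3 [e4 [e1 [e2 [gam [i1 [i2 [d1 [d2 [H0 [H1 [HF [HL HS]]]]]]]]]]]]]].
  have IA' := Inv_dual IA.
  case: H0 => Hi Hie Hk Hke [He1 He2 He3 He4 N12].
  case: H1 => F3 F4 F4' F1 [F2 N12'].
  case: HL => L1 L2 L3.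
  have H0' : [/\ kap \in fV (dual A), feta (dual A) kap = Contr, iota \in fV (dual A),
     feta (dual A) iota = Cut & [/\ e1 \in fE (dual A), e2 \in fE (dual A),
     e4 \in fE (dual A), e3 \in fE (dual A) & e1 != e2]].
    by rewrite /= Hie Hke.
  have H1' : [/\ flo (dual A) e1 = Some kap, flo (dual A) e2 = Some kap,
     fup (dual A) e4 = Some kap, flo (dual A) e4 = Some iota &
     (e3 != e4 /\ flo (dual A) e3 = Some iota)] by [].
  have HF' := frame_dual HF.
  have HL' : [/\ feta (dual B) gam = Cocontr, feta (dual B) i1 = Cut & feta (dual B) i2 = Cut].
    by rewrite /= L1 L2 L3.
  have HS' : forall x, x \in fE (dual B) ->
       fup (dual B) x = (if x == d1 then Some gam else if x == d2 then Some gam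
                  else fup (dual A) x) /\
       flo (dual B) x = (if x == d1 then Some i1 else if x == d2 then Some i2
                  else if x == e1 then Some i1 else if x == e2 then Some i2
                  else if x == e3 then Some gam else flo (dual A) x).
    by move=> x Hx; case: (HS x Hx) => ? ?; split.
  split.
    exact: Inv_undual (c1_Inv IA' H0' H1' HF' HL' HS').
  apply: cf_undual; first by case: (Inv_undual (c1_Inv IA' H0' H1' HF' HL' HS')).
  apply: (c1_cf IA' H0' H1' HF' HL' HS').
  by apply: cf_dual => //; case: IA.
- case=> gam [kap [e1 [e2 [e [e3 [e4 [k1 [k2 [g3 [g4 [d13 [d14 [d23 [d24 [H0 [H1 [HF [HL HS]]]]]]]]]]]]]]]]]].
  split; [exact: (c3_Inv IA CA H0 H1 HF HL HS)|exact: (c3_cf IA CA H0 H1 HF HL HS)].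
Qed.

Theorem proposition4p17 (A B : flow) :
  is_flow A -> cycle_free A -> steps_c A B -> cycle_free B.
Proof.
move=> HA CA S; have IA := is_flow_Inv HA.
elim: S IA CA => // A0 B0 C0 St _ IH IA CA.
have [IB CB] := step_ok St IA CA.
exact: IH IB CB.
Qed.
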